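(* Let $m\in\{1,2\}$ and $\gamma\in(\gamma_\star,\gamma_1]$. Then for every $z\in(0,z_1]$ one has $C(V_1;\gamma,z,P_8)>C_1$. Consequently any $z\in(0,z_M]$ with $C(V_1;\gamma,z,P_8)=C_1$ lies in $(z_1,z_M]$.
   Context: Fix $m\in\{1,2\}$. For $z>0$ put $\lambda=1+m\gamma z$, $a_1=1+\frac{m(\gamma-1)}{2}$, $a_2=\frac{m(\gamma-1)+mz\gamma(\gamma-3)}{2}$, $a_3=\frac{mz\gamma(\gamma-1)}{2}$, $G(V,C;\gamma,z)=C^2[(m+1)V+2mz]-V(1+V)(\lambda+V)$, $F(V,C;\gamma,z)=C\{C^2[1+\frac{mz}{1+V}]-a_1(1+V)^2+a_2(1+V)-a_3\}$; ODE $\frac{dC}{dV}=\frac FG$. $V_1=-\frac2{\gamma+1}$, $C_1=\frac{\sqrt{2\gamma(\gamma-1)}}{\gamma+1}$. $z_M=(\sqrt\gamma+\sqrt2)^{-2}$; $w(z)=\sqrt{1-2(\gamma+2)z+(\gamma-2)^2z^2}$, $V_8=\frac{-1+(\gamma-2)z+w}{2}$, $C_8=1+V_8$, $P_8=(V_8,C_8)$. $z_1=\frac{\sqrt5-1}{2(1+\sqrt5+\gamma)}$ (the value with $C_8=\sqrt{-V_8}$). $\gamma_1=1+\sqrt2$; $\gamma_\star\ (\approx1.7)$ is the value with $C_1(\gamma_\star)=\sqrt{-\frac{\gamma_\star}{2+\sqrt{2\gamma_\star}}V_1(\gamma_\star)}$. For $z\in(0,z_M]$, $C(\cdot;\gamma,z,P_8):[V_1,V_8]\to(0,\infty)$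 is the real-analytic solution of the ODE near $V_8$ with $C(V_8)=C_8$ and $C'(V_8)$ equal to the unique negative root of $-G_Cc^2+(F_C-G_V)c+F_V=0$ (partials at $P_8$), continued to $[V_1,V_8]$. *)

(* Defs.v *)
From Stdlib Require Import Reals.
From Coquelicot Require Import Coquelicot.
Open Scope R_scope.

(* Self-similar ODE dC/dV = F/G with parameters m, gamma (g), z. *)
Definition lam (m g z : R) : R := 1 + m * g * z.
Definition a1 (m g : R) : R := 1 + m * (g - 1) / 2.
Definition a2 (m g z : R) : R := (m * (g - 1) + m * z * g * (g - 3)) / 2.
Definition a3 (m g z : R) : R := m * z * g * (g - 1) / 2.

Definition Gf (m g z V C : R) : R :=
  C ^ 2 * ((m + 1) * V + 2 * m * z) - V * (1 + V) * (lam m g z + V).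
Definition Ff (m g z V C : R) : R :=
  C * (C ^ 2 * (1 + m * z / (1 + V)) - a1 m g * (1 + V) ^ 2
       + a2 m g z * (1 + V) - a3 m g z).

Definition Vpt1 (g : R) : R := - (2 / (g + 1)).
Definition Cpt1 (g : R) : R := sqrt (2 * g * (g - 1)) / (g + 1).

Definition zM (g : R) : R := / (sqrt g + sqrt 2) ^ 2.
Definition wz (g z : R) : R := sqrt (1 - 2 * (g + 2) * z + (g - 2) ^ 2 * z ^ 2).
Definition Vpt8 (g z : R) : R := (-1 + (g - 2) * z + wz g z) / 2.
Definition Cpt8 (g z : R) : R := 1 + Vpt8 g z.

Definition z1 (g : R) : R := (sqrt 5 - 1) / (2 * (1 + sqrt 5 + g)).
Definition gamma1 : R := 1 + sqrt 2.

(* gamma_star: the value gs > 1 with Cpt1(gs) = sqrt(-(gs/(2+sqrt(2 gs))) Vpt1(gs))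
   (unique in (1, +oo); approximately 1.7). *)
Definition is_gamma_star (gs : R) : Prop :=
  1 < gs /\ Cpt1 gs = sqrt (- (gs / (2 + sqrt (2 * gs))) * Vpt1 gs).

Definition G_V (m g z : R) : R := Derive (fun V => Gf m g z V (Cpt8 g z)) (Vpt8 g z).
Definition G_C (m g z : R) : R := Derive (fun C => Gf m g z (Vpt8 g z) C) (Cpt8 g z).
Definition F_V (m g z : R) : R := Derive (fun V => Ff m g z V (Cpt8 g z)) (Vpt8 g z).
Definition F_C (m g z : R) : R := Derive (fun C => Ff m g z (Vpt8 g z) C) (Cpt8 g z).

Definition is_neg_slope (m g z c : R) : Prop :=
  c < 0 /\ - G_C m g z * c ^ 2 + (F_C m g z - G_V m g z) * c + F_V m g z = 0.

(* C is (a representative of) the solution C(.; gamma, z, P8) on [Vpt1, Vpt8]: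
   - real-analytic near Vpt8 (given by a convergent power series around Vpt8),
     solving the ODE there (in the cleared form G C' = F), with C(Vpt8) = Cpt8 and
     C'(Vpt8) the negative root above;
   - continued to [Vpt1, Vpt8] as a positive solution of dC/dV = F/G
     (G nonzero along the curve on (Vpt1, Vpt8)), continuous at Vpt1 from the right. *)
Definition is_P8_solution (m g z : R) (C : R -> R) : Prop :=
  (exists delta : R, 0 < delta /\ exists a : nat -> R,
      forall V, Rabs (V - Vpt8 g z) < delta ->
        is_pseries a (V - Vpt8 g z) (C V) /\
        Gf m g z V (C V) * Derive C V = Ff m g z V (C V)) /\
  C (Vpt8 g z) = Cpt8 g z /\
  (exists c, is_neg_slope m g z c /\ is_derive C (Vpt8 g z) c) /\
  (forall V, Vpt1 g <= V <= Vpt8 g z -> 0 < C V) /\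
  (forall V, Vpt1 g < V < Vpt8 g z ->
      Gf m g z V (C V) <> 0 /\
      is_derive C V (Ff m g z V (C V) / Gf m g z V (C V))) /\
  filterlim C (at_right (Vpt1 g)) (locally (C (Vpt1 g))).

(* Main.v *)
Require Import Defs.
From Stdlib Require Import Reals.
From Coquelicot Require Import Coquelicot.
Open Scope R_scope.
From Stdlib Require Import Lra Psatz Classical.
Open Scope R_scope.

Lemma ball_R (x y e : R) : ball x e y <-> Rabs (y - x) < e.
Proof. reflexivity. Qed.

Lemma cont_pos (f : R -> R) x : continuous f x -> 0 < f x ->
  exists d, 0 < d /\ forall y, Rabs (y - x) < d -> 0 < f y.
Proof.
  intros Hc Hp. apply filterlim_locally with (eps := mkposreal _ Hp) in Hc.
  destruct Hc as [d Hd]. exists d. split. apply cond_pos.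
  intros y Hy. specialize (Hd y Hy). change (Rabs (f y - f x) < f x) in Hd.
  apply Rabs_lt_between in Hd. lra.
Qed.

Lemma cont_neg (f : R -> R) x : continuous f x -> f x < 0 ->
  exists d, 0 < d /\ forall y, Rabs (y - x) < d -> f y < 0.
Proof.
  intros Hc Hp. assert (Hp' : 0 < - f x) by lra.
  apply filterlim_locally with (eps := mkposreal _ Hp') in Hc.
  destruct Hc as [d Hd]. exists d. split. apply cond_pos.
  intros y Hy. specialize (Hd y Hy). change (Rabs (f y - f x) < - f x) in Hd.
  apply Rabs_lt_between in Hd. lra.
Qed.

Lemma deriv_lim (f : R -> R) x d : is_derive f x d -> forall eps, 0 < eps ->
  exists del, 0 < del /\ forall h, h <> 0 -> Rabs h < del ->
    Rabs ((f (x + h) - f x) / h - d) < eps.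
Proof.
  intros H eps He. apply is_derive_Reals in H. destruct (H eps He) as [del Hd].
  exists del. split. apply cond_pos. intros h Hh Hh'. now apply Hd.
Qed.

Lemma deriv_neg_right (f : R -> R) x d : is_derive f x d -> d < 0 ->
  exists eta, 0 < eta /\ forall y, x < y < x + eta -> f y < f x.
Proof.
  intros H Hd. destruct (deriv_lim f x d H (- d / 2)) as [del [Hdel H2]]. lra.
  exists del. split; auto. intros y Hy.
  specialize (H2 (y - x)). replace (x + (y - x)) with y in H2 by ring.
  assert (Hh : y - x <> 0) by lra.
  assert (Ha : Rabs (y - x) < del) by (rewrite Rabs_right; lra).
  specialize (H2 Hh Ha). apply Rabs_lt_between in H2.
  destruct H2 as [_ H2].
  assert (Hq : (f y - f x) / (y - x) < 0) by lra.
  assert (Hyx : 0 < y - x) by lra.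
  assert (f y - f x < 0); [|lra].
  replace (f y - f x) with ((f y - f x) / (y - x) * (y - x)) by (field; lra).
  nra.
Qed.

Lemma deriv_neg_left (f : R -> R) x d : is_derive f x d -> d < 0 ->
  exists eta, 0 < eta /\ forall y, x - eta < y < x -> f x < f y.
Proof.
  intros H Hd. destruct (deriv_lim f x d H (- d / 2)) as [del [Hdel H2]]. lra.
  exists del. split; auto. intros y Hy.
  specialize (H2 (y - x)). replace (x + (y - x)) with y in H2 by ring.
  assert (Hh : y - x <> 0) by lra.
  assert (Ha : Rabs (y - x) < del) by (rewrite Rabs_left; lra).
  specialize (H2 Hh Ha). apply Rabs_lt_between in H2.
  destruct H2 as [_ H2].
  assert (Hq : (f y - f x) / (y - x) < 0) by lra.
  assert (Hyx : 0 < x - y) by lra.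
  assert (0 < f y - f x); [|lra].
  replace (f y - f x) with (- ((f y - f x) / (y - x)) * (x - y)) by (field; lra).
  nra.
Qed.

Lemma deriv_pos_left (f : R -> R) x d : is_derive f x d -> 0 < d ->
  exists eta, 0 < eta /\ forall y, x - eta < y < x -> f y < f x.
Proof.
  intros H Hd. destruct (deriv_lim f x d H (d / 2)) as [del [Hdel H2]]. lra.
  exists del. split; auto. intros y Hy.
  specialize (H2 (y - x)). replace (x + (y - x)) with y in H2 by ring.
  assert (Hh : y - x <> 0) by lra.
  assert (Ha : Rabs (y - x) < del) by (rewrite Rabs_left; lra).
  specialize (H2 Hh Ha). apply Rabs_lt_between in H2.
  destruct H2 as [H2 _].
  assert (Hq : 0 < (f y - f x) / (y - x)) by lra.
  assert (Hyx : 0 < x - y) by lra.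
  assert (f y - f x < 0); [|lra].
  replace (f y - f x) with (- ((f y - f x) / (y - x) * (x - y))) by (field; lra).
  nra.
Qed.

Lemma barrier (D dD : R -> R) a b : a < b ->
  (forall x, a < x <= b -> is_derive D x (dD x)) -> 0 <= D b ->
  (forall x, a < x <= b -> D x = 0 -> dD x < 0) ->
  forall x, a < x < b -> 0 < D x.
Proof.
  intros Hab Hder Hb Hz.
  assert (Hcont : forall x, a < x <= b -> continuous D x).
  { intros x Hx. apply (@ex_derive_continuous R_AbsRing R_NormedModule). eexists. apply Hder; auto. }
  assert (Heta : exists eta, 0 < eta /\ forall y, b - eta < y < b -> 0 < D y).
  { destruct (Rle_lt_or_eq_dec _ _ Hb) as [Hb'|Hb'].
    - destruct (cont_pos D b (Hcont b (conj Hab (Rle_refl b))) Hb') as [d [Hd H]].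
      exists d. split; auto. intros y Hy. apply H. rewrite Rabs_left; lra.
    - destruct (deriv_neg_left D b (dD b) (Hder b (conj Hab (Rle_refl b))))
        as [d [Hd H]]. apply Hz; auto; lra.
      exists d. split; auto. intros y Hy. rewrite Hb'. apply H. lra. }
  destruct Heta as [eta [Heta Hpos]].
  intros x Hx. destruct (Rlt_or_le 0 (D x)) as [Hlt|Hle]; auto. exfalso.
  destruct (Rlt_or_le (b - eta) x) as [Hxe|Hxe].
  { specialize (Hpos x). lra. }
  set (E := fun y => x <= y <= b - eta /\ D y <= 0).
  assert (HbE : bound E). { exists (b - eta). intros y Hy. unfold E in Hy. lra. }
  assert (HxE : exists y, E y). { exists x. unfold E. lra. }
  destruct (completeness E HbE HxE) as [s [Hub Hlub]].
  assert (Hxs : x <= s). { apply Hub. unfold E. repeat split; lra. }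
  assert (Hsb : s <= b - eta). { apply Hlub. intros y Hy. unfold E in Hy. lra. }
  assert (Hs : a < s <= b) by lra.
  assert (Hright : forall d, 0 < d -> (forall y, s < y < s + d -> D y < 0) -> False).
  { intros d Hd H. set (y := s + Rmin d eta / 2).
    assert (Hm1 : 0 < Rmin d eta) by (apply Rmin_glb_lt; lra).
    assert (Hm2 : Rmin d eta <= d) by apply Rmin_l.
    assert (Hm3 : Rmin d eta <= eta) by apply Rmin_r.
    assert (Hy : D y < 0) by (apply H; unfold y; lra).
    destruct (Rle_or_lt y (b - eta)) as [Hy2|Hy2].
    - assert (E y) by (unfold E, y in *; repeat split; lra). specialize (Hub y H0). unfold y in Hub. lra.
    - specialize (Hpos y). assert (0 < D y) by (apply Hpos; unfold y in *; lra). lra. }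
  destruct (Rtotal_order (D s) 0) as [Hs0|[Hs0|Hs0]].
  - destruct (cont_neg D s (Hcont s Hs) Hs0) as [d [Hd H]].
    apply (Hright d Hd). intros y Hy. apply H. rewrite Rabs_right; lra.
  - destruct (deriv_neg_right D s (dD s) (Hder s Hs) (Hz s Hs Hs0)) as [d [Hd H]].
    apply (Hright d Hd). intros y Hy. rewrite <- Hs0. apply H; lra.
  - destruct (cont_pos D s (Hcont s Hs) Hs0) as [d [Hd H]].
    assert (Hex : exists y, E y /\ s - d / 2 < y).
    { destruct (Rle_or_lt x (s - d / 2)) as [Hc|Hc].
      - apply Classical_Prop.NNPP. intro Hn.
        assert (s <= s - d / 2); [|lra]. apply Hlub. intros y Hy.
        destruct (Rle_or_lt y (s - d/2)); auto. exfalso. apply Hn. exists y. auto.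
      - exists x. split. unfold E; repeat split; lra. lra. }
    destruct Hex as [y [HyE Hy]]. assert (y <= s) by (apply Hub; auto).
    assert (0 < D y) by (apply H; rewrite Rabs_left1; lra). unfold E in HyE. lra.
Qed.
Lemma at_right_ex (a : R) (P : R -> Prop) : at_right a P ->
  forall eta, 0 < eta -> exists y, a < y < a + eta /\ P y.
Proof.
  intros [d Hd] eta He. set (y := a + Rmin d eta / 2).
  assert (0 < Rmin d eta) by (apply Rmin_glb_lt; [apply cond_pos|lra]).
  assert (Rmin d eta <= d) by apply Rmin_l. assert (Rmin d eta <= eta) by apply Rmin_r.
  exists y. split. unfold y; lra. apply Hd.
  change (Rabs (y - a) < d). unfold y. rewrite Rabs_right; lra. unfold y; lra.
Qed.

Lemma lim_right_ge (f : R -> R) a L M eta : filterlim f (at_right a) (locally L) ->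
  0 < eta -> (forall x, a < x < a + eta -> M <= f x) -> M <= L.
Proof.
  intros Hl He Hm. destruct (Rle_or_lt M L) as [H|H]; auto. exfalso.
  assert (Hp : 0 < M - L) by lra.
  apply filterlim_locally with (eps := mkposreal _ Hp) in Hl.
  destruct (at_right_ex a _ Hl eta He) as [y [Hy Hb]].
  change (Rabs (f y - L) < M - L) in Hb. apply Rabs_lt_between in Hb.
  specialize (Hm y Hy). lra.
Qed.

Lemma endpoint (D dD : R -> R) a b : a < b ->
  (forall x, a < x < b -> is_derive D x (dD x)) ->
  (forall x, a < x < b -> 0 < D x) ->
  filterlim D (at_right a) (locally (D a)) ->
  (D a = 0 -> exists eta, 0 < eta /\ forall x, a < x < a + eta -> dD x < 0) ->
  0 < D a.
Proof.
  intros Hab Hder Hpos Hlim Hev.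
  assert (H0 : 0 <= D a).
  { apply (lim_right_ge D a (D a) 0 (b - a) Hlim). lra.
    intros x Hx. left. apply Hpos. lra. }
  destruct (Rle_lt_or_eq_dec _ _ H0) as [H|H]; auto. exfalso.
  destruct (Hev (eq_sym H)) as [eta [He Hn]].
  set (y := a + Rmin eta (b - a) / 2).
  assert (0 < Rmin eta (b - a)) by (apply Rmin_glb_lt; lra).
  assert (Rmin eta (b - a) <= eta) by apply Rmin_l.
  assert (Rmin eta (b - a) <= b - a) by apply Rmin_r.
  assert (Hy : a < y < b) by (unfold y; lra).
  assert (Hdec : forall x, a < x < y -> D y < D x).
  { intros x Hx.
    destruct (MVT_gen D x y dD) as [c [Hc Heq]].
    - intros t Ht. rewrite Rmin_left in Ht by lra. rewrite Rmax_right in Ht by lra.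
      apply Hder. lra.
    - intros t Ht. rewrite Rmin_left in Ht by lra. rewrite Rmax_right in Ht by lra.
      apply continuity_pt_filterlim.
      apply (@ex_derive_continuous R_AbsRing R_NormedModule). eexists. apply Hder. lra.
    - rewrite Rmin_left in Hc by lra. rewrite Rmax_right in Hc by lra.
      assert (dD c < 0) by (apply Hn; unfold y in *; lra).
      assert (0 < y - x) by lra. nra. }
  assert (D y <= D a).
  { apply (lim_right_ge D a (D a) (D y) (y - a) Hlim). lra.
    intros x Hx. left. apply Hdec. lra. }
  specialize (Hpos y Hy). lra.
Qed.

Lemma cplus (f g : R -> R) x : continuous f x -> continuous g x -> continuous (fun y => f y + g y) x.
Proof. intros. now apply (continuous_plus f g). Qed.
Lemma cmult (f g : R -> R) x : continuous f x -> continuous g x -> continuous (fun y => f y * g y) x.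
Proof. intros. now apply (continuous_mult f g). Qed.
Lemma copp (f : R -> R) x : continuous f x -> continuous (fun y => - f y) x.
Proof. intros. now apply (continuous_opp f). Qed.
Lemma cminus (f g : R -> R) x : continuous f x -> continuous g x -> continuous (fun y => f y - g y) x.
Proof. intros. apply (continuous_plus f (fun y => - g y)); auto. now apply (continuous_opp g). Qed.
Lemma cinv (f : R -> R) x : continuous f x -> f x <> 0 -> continuous (fun y => / f y) x.
Proof. intros. now apply continuous_Rinv_comp. Qed.
Lemma cdiv (f g : R -> R) x : continuous f x -> continuous g x -> g x <> 0 -> continuous (fun y => f y / g y) x.
Proof. intros. unfold Rdiv. apply cmult; auto. now apply cinv. Qed.
Lemma cpow (f : R -> R) n x : continuous f x -> continuous (fun y => f y ^ n) x.
Proof. intros. induction n; simpl. apply continuous_const. now apply cmult. Qed.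
Lemma cconst (k : R) x : continuous (fun _ : R => k) x.
Proof. apply continuous_const. Qed.
Lemma cid x : continuous (fun y : R => y) x.
Proof. apply continuous_id. Qed.

Lemma ext_cont (C : R -> R) a : filterlim C (at_right a) (locally (C a)) ->
  continuous (fun x => if Rle_dec x a then C a else C x) a.
Proof.
  intros Hl. unfold continuous. destruct (Rle_dec a a) as [_|n]; [|lra].
  apply filterlim_locally. intros eps.
  apply filterlim_locally with (eps := eps) in Hl.
  destruct Hl as [d Hd]. exists d. intros y Hy.
  destruct (Rle_dec y a) as [Hya|Hya].
  - change (Rabs (C a - C a) < eps). rewrite Rminus_eq_0, Rabs_R0. apply cond_pos.
  - apply Hd; auto. lra.
Qed.

Lemma ev_pos_right (C : R -> R) (h : R -> R -> R) a :
  continuous (fun x => h x (if Rle_dec x a then C a else C x)) a -> 0 < h a (C a) ->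
  exists eta, 0 < eta /\ forall x, a < x < a + eta -> 0 < h x (C x).
Proof.
  intros Hc Hp.
  assert (Hp' : 0 < (fun x => h x (if Rle_dec x a then C a else C x)) a).
  { simpl. destruct (Rle_dec a a); [auto|lra]. }
  destruct (cont_pos _ a Hc Hp') as [d [Hd H]]. exists d. split; auto.
  intros x Hx. specialize (H x). simpl in H. destruct (Rle_dec x a) as [Hxa|Hxa]; [lra|].
  apply H. rewrite Rabs_right; lra.
Qed.

Lemma lim_right_ext (C : R -> R) (h : R -> R -> R) a :
  continuous (fun x => h x (if Rle_dec x a then C a else C x)) a ->
  filterlim (fun x => h x (C x)) (at_right a) (locally (h a (C a))).
Proof.
  intros Hc. unfold continuous in Hc.
  apply filterlim_locally. intros eps.
  apply filterlim_locally with (eps := eps) in Hc.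
  destruct Hc as [d Hd]. exists d. intros y Hy Hay.
  specialize (Hd y Hy). simpl in Hd.
  destruct (Rle_dec y a) as [H1|H1]; [lra|].
  destruct (Rle_dec a a) as [_|H2]; [|lra]. exact Hd.
Qed.

Lemma barrierD (D : R -> R) a b : a < b ->
  (forall x, a < x <= b -> ex_derive D x) -> 0 <= D b ->
  (forall x, a < x <= b -> D x = 0 -> Derive D x < 0) ->
  forall x, a < x < b -> 0 < D x.
Proof.
  intros Hab Hd Hb Hz. apply (barrier D (Derive D) a b Hab); auto.
  intros x Hx. apply Derive_correct. auto.
Qed.


Ltac cont1 :=
  match goal with
  | |- continuous (fun x => ?f + ?g) _ => apply (cplus (fun x => f) (fun x => g))
  | |- continuous (fun x => ?f - ?g) _ => apply (cminus (fun x => f) (fun x => g))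
  | |- continuous (fun x => ?f * ?g) _ => apply (cmult (fun x => f) (fun x => g))
  | |- continuous (fun x => ?f / ?g) _ => apply (cdiv (fun x => f) (fun x => g))
  | |- continuous (fun x => ?f ^ ?n) _ => apply (cpow (fun x => f))
  | |- continuous (fun x => - ?f) _ => apply (copp (fun x => f))
  | |- continuous (fun x => x) _ => apply cid
  | |- continuous (fun x => ?k) _ => apply cconst
  | H : continuous ?K ?a |- continuous (fun x => ?K x) ?a => exact H
  end.
Ltac cont := repeat cont1.

Lemma cont_D1 (K : R -> R) k a : continuous K a -> continuous (fun x => K x - k) a.
Proof. intros HK. cont. Qed.
Lemma cont_D2 (K : R -> R) a : continuous K a -> continuous (fun x => K x ^ 2 + x) a.
Proof. intros HK. cont. Qed.

Lemma cont_F m g z (K : R -> R) a : continuous K a -> 1 + a <> 0 ->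
  continuous (fun x => Ff m g z x (K x)) a.
Proof. intros HK Ha. unfold Ff. cont. all: simpl; auto. Qed.

Lemma cont_N m g z (K : R -> R) a : continuous K a -> 1 + a <> 0 ->
  continuous (fun x => 2 * K x * Ff m g z x (K x) + Gf m g z x (K x)) a.
Proof. intros HK Ha. unfold Ff, Gf. cont. all: simpl; auto. Qed.


Lemma sqrt5_facts : sqrt 5 ^ 2 = 5 /\ 2236/1000 < sqrt 5 < 2237/1000.
Proof.
  assert (H : sqrt 5 * sqrt 5 = 5) by (apply sqrt_sqrt; lra).
  assert (H0 : 0 <= sqrt 5) by apply sqrt_pos.
  split. simpl. lra. split; nra.
Qed.

Lemma sqrt2_facts : sqrt 2 ^ 2 = 2 /\ 1414/1000 < sqrt 2 < 14143/10000.
Proof.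
  assert (H : sqrt 2 * sqrt 2 = 2) by (apply sqrt_sqrt; lra).
  assert (H0 : 0 <= sqrt 2) by apply sqrt_pos.
  split. simpl. lra. split; nra.
Qed.

Lemma P8_facts g z : 1 < g < 2415/1000 -> 0 < z <= z1 g ->
  (Vpt8 g z)^2 + (Vpt8 g z)*(1-(g-2)*z) + 2*z = 0 /\ -2/5 <= Vpt8 g z < 0 /\
  (Vpt8 g z)^2 + 3*(Vpt8 g z) + 1 >= 0 /\ 0 < 2-(g-2)*(Vpt8 g z) /\
  z = -(Vpt8 g z)*(1+Vpt8 g z)/(2-(g-2)*(Vpt8 g z)).
Proof.
  intros Hg [Hz0 Hz]. destruct sqrt5_facts as [H5 [H5a H5b]].
  unfold z1 in Hz. set (s5 := sqrt 5) in *.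
  assert (Hz' : 2 * z * (1 + s5 + g) <= s5 - 1).
  { apply (Rmult_le_compat_r (2 * (1 + s5 + g))) in Hz; [|lra].
    replace ((s5 - 1) / (2 * (1 + s5 + g)) * (2 * (1 + s5 + g))) with (s5 - 1) in Hz by (field; lra).
    lra. }
  set (disc := 1 - 2 * (g + 2) * z + (g - 2) ^ 2 * z ^ 2).
  assert (H2z : 2 * (g + 2) * z <= 1).
  { assert (Ha : 2 * z * (1 + s5 + g) * (g + 2) <= (s5 - 1) * (g + 2)) by nra.
    assert (Hb : (s5 - 1) * (g + 2) <= 1 + s5 + g) by nra.
    assert (Hc : 0 < 1 + s5 + g) by lra. nra. }
  assert (Hdisc : 0 <= disc).
  { unfold disc. assert (0 <= (g - 2) ^ 2 * z ^ 2) by (apply Rmult_le_pos; apply pow2_ge_0). lra. }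
  unfold Vpt8, wz. fold disc. set (w := sqrt disc).
  assert (Hw : w * w = disc) by (apply sqrt_sqrt; auto).
  assert (Hw0 : 0 <= w) by apply sqrt_pos.
  set (u := (-1 + (g - 2) * z + w) / 2).
  assert (Hrel : u^2 + u*(1-(g-2)*z) + 2*z = 0) by (unfold u; unfold disc in Hw; nra).
  assert (Hb : 0 < 1 - (g - 2) * z) by nra.
  assert (H2w : 2 * u + 1 - (g - 2) * z = w) by (unfold u; field).
  assert (Hu0 : u < 0).
  { assert (Hpos : 0 < u + (1 - (g - 2) * z)) by lra. nra. }
  set (u1 := (s5 - 3) / 2).
  assert (Hu1sq : u1^2 + 3*u1 + 1 = 0) by (unfold u1; nra).
  assert (Hphi : u1^2 + u1*(1-(g-2)*z) + 2*z <= 0).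
  { assert (HD : 0 < 2 - (g - 2) * u1) by (unfold u1; nra).
    assert (Hk : z * (2 - (g - 2) * u1) <= (s5 - 2)).
    { assert (E : (s5 - 1) * (2 - (g - 2) * u1) = 2 * (s5 - 2) * (1 + s5 + g)) by (unfold u1; nra).
      nra. }
    unfold u1 in *. nra. }
  assert (Huu1 : u1 <= u).
  { destruct (Rle_or_lt u1 u) as [H|H]; auto. exfalso.
    assert ((u - u1) * (u + u1 + (1 - (g - 2) * z)) < 0) by nra. nra. }
  assert (Hu1b : -2/5 < u1) by (unfold u1; lra).
  assert (Hs : u^2 + 3*u + 1 >= 0).
  { assert (E : u^2 + 3*u + 1 = (u - u1) * (u - (-3 - s5)/2)) by (unfold u1; nra).
    rewrite E. apply Rle_ge. apply Rmult_le_pos; lra. }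
  assert (HDn : 0 < 2 - (g - 2) * u) by nra.
  split; [exact Hrel|]. split; [lra|]. split; [exact Hs|]. split; [exact HDn|].
  field_simplify_eq; [nra | lra].
Qed.


Lemma dG_V m g z V C : is_derive (fun V => Gf m g z V C) V
  (C^2*(m+1) - ((1+V)*(lam m g z+V) + V*(lam m g z+V) + V*(1+V))).
Proof. unfold Gf. auto_derive; [auto|ring]. Qed.

Lemma dG_C m g z V C : is_derive (fun C => Gf m g z V C) C (2*C*((m+1)*V+2*m*z)).
Proof. unfold Gf. auto_derive; [auto|ring]. Qed.

Lemma dF_V m g z V C : 1 + V <> 0 -> is_derive (fun V => Ff m g z V C) V
  (C*(C^2*(-(m*z)/(1+V)^2) - a1 m g*2*(1+V) + a2 m g z)).
Proof. intros H. unfold Ff. auto_derive. auto. field. auto. Qed.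

Lemma dF_C m g z V C : 1 + V <> 0 -> is_derive (fun C => Ff m g z V C) C
  ((C^2*(1+m*z/(1+V)) - a1 m g*(1+V)^2 + a2 m g z*(1+V) - a3 m g z) + C*(2*C*(1+m*z/(1+V)))).
Proof. intros H. unfold Ff. auto_derive. auto. field. auto. Qed.

Lemma dphi m g z (C : R -> R) x d : is_derive C x d ->
  is_derive (fun V => Gf m g z V (C V)) x
   ((C x)^2*(m+1) - ((1+x)*(lam m g z+x) + x*(lam m g z+x) + x*(1+x)) + 2*(C x)*((m+1)*x+2*m*z)*d).
Proof.
  intros H. unfold Gf. auto_derive. eexists; eauto.
  replace (Derive (fun x0 : R => C x0) x) with d by (symmetry; apply is_derive_unique; exact H). ring.
Qed.

Lemma dsq (C : R -> R) x d : is_derive C x d -> is_derive (fun V => C V ^ 2 + V) x (2 * C x * d + 1).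
Proof.
  intros H. auto_derive. eexists; eauto. replace (Derive (fun x0 : R => C x0) x) with d by (symmetry; apply is_derive_unique; exact H). ring.
Qed.


Lemma mneg (a b : R) : a < 0 -> 0 < b -> a * b < 0.
Proof. intros; nra. Qed.

Lemma mnp (a b : R) : a <= 0 -> 0 <= b -> a * b <= 0.
Proof. intros; nra. Qed.

Lemma sum_np (a b : R) : a <= 0 -> b <= 0 -> a + b <= 0.
Proof. intros; lra. Qed.

Lemma term_np (b t : R) (k l : nat) : b <= 0 -> 0 <= t <= 1 -> b * (t^k * (1-t)^l) <= 0.
Proof. intros Hb Ht. assert (0 <= t^k * (1-t)^l) by (apply Rmult_le_pos; apply pow_le; lra). nra. Qed.

Definition q1_1 (V u g : R) : R := (1)*V^2*u*g^2 + (-1)*V^2*u*g + (-2)*V^2*u + (-2)*V^2*g + (-2)*V^2 + (2)*V*u^2*g + (-2)*V*u^2 + (1)*V*u*g^2 + (1)*V*u*g + (-10)*V*u + (-4)*V*g + (-8)*V + (2)*u^3 + (2)*u^2*g + (2)*u^2 + (2)*u*g + (-6)*u + (-2)*g + (-6).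

Definition p_1 (V u g : R) : R := (-2)*V^3*u*g^2 + (4)*V^3*u*g + (4)*V^3*g + (2)*V^2*u^2*g^2 + (-4)*V^2*u^2*g + (-2)*V^2*u*g^2 + (2)*V^2*u*g + (4)*V^2*u + (8)*V^2*g + (4)*V^2 + (2)*V*u^2*g^2 + (-6)*V*u^2*g + (-6)*V*u*g + (8)*V*u + (4)*V*g + (8)*V + (-2)*u^2*g + (4)*u^2 + (-4)*u*g + (8)*u + (4).

Lemma uni1 (c : R) : 3/5 <= c <= 1 -> (-8)*c^2 < 0.
Proof.
  intros Hc. set (t := (c - 3/5) * (5/2)). assert (Ht : 0 <= t <= 1) by (unfold t; lra).
  assert (Hct : c = 3/5 + 2/5*t) by (unfold t; field). clearbody t. subst c.
  assert (E : (1/10) + (-8)*(3/5 + 2/5*t)^2 = ((-139)/(50)) * (t^0 * (1-t)^2) + ((-47)/(5)) * (t^1 * (1-t)^1) + ((-79)/(10)) * (t^2 * (1-t)^0)) by field.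
  assert (H : (1/10) + (-8)*(3/5 + 2/5*t)^2 <= 0).
  { rewrite E. repeat apply sum_np; apply term_np; lra. }
  lra.
Qed.

Lemma uni2 (c : R) : 3/5 <= c <= 1 -> (-4)*c^2 + (2)*c^3 < 0.
Proof.
  intros Hc. set (t := (c - 3/5) * (5/2)). assert (Ht : 0 <= t <= 1) by (unfold t; lra).
  assert (Hct : c = 3/5 + 2/5*t) by (unfold t; field). clearbody t. subst c.
  assert (E : (1/10) + (-4)*(3/5 + 2/5*t)^2 + (2)*(3/5 + 2/5*t)^3 = ((-227)/(250)) * (t^0 * (1-t)^3) + ((-189)/(50)) * (t^1 * (1-t)^2) + ((-49)/(10)) * (t^2 * (1-t)^1) + ((-19)/(10)) * (t^3 * (1-t)^0)) by field.
  assert (H : (1/10) + (-4)*(3/5 + 2/5*t)^2 + (2)*(3/5 + 2/5*t)^3 <= 0).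
  { rewrite E. repeat apply sum_np; apply term_np; lra. }
  lra.
Qed.

Lemma uni3 (c : R) : 3/5 <= c <= 1 -> (-2)*c^2 + (2)*c^3 <= 0.
Proof.
  intros Hc. set (t := (c - 3/5) * (5/2)). assert (Ht : 0 <= t <= 1) by (unfold t; lra).
  assert (Hct : c = 3/5 + 2/5*t) by (unfold t; field). clearbody t. subst c.
  assert (E : (-2)*(3/5 + 2/5*t)^2 + (2)*(3/5 + 2/5*t)^3 = ((-36)/(125)) * (t^0 * (1-t)^3) + ((-24)/(25)) * (t^1 * (1-t)^2) + ((-4)/(5)) * (t^2 * (1-t)^1) + ((0)/(1)) * (t^3 * (1-t)^0)) by field.
  assert (H : (-2)*(3/5 + 2/5*t)^2 + (2)*(3/5 + 2/5*t)^3 <= 0).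
  { rewrite E. repeat apply sum_np; apply term_np; lra. }
  lra.
Qed.

Lemma I1core_1_1 (W c : R) : 3/5 <= c < 1 -> 1 - c <= W < 1 -> q1_1 (-W) (c-1) 1 < 0.
Proof.
  intros Hc HW. set (t := (W - (1 - c)) / c). assert (Hc0 : 0 < c) by lra.
  assert (HWt : W = 1 - c + c * t) by (unfold t; field; lra).
  assert (Ht0 : 0 <= t) by (unfold t; apply Rmult_le_pos; [lra| left; apply Rinv_0_lt_compat; lra]).
  assert (Ht1 : t < 1).
  { assert (c * t < c) by lra. nra. }
  clearbody t. subst W.
  assert (H0 := uni1 c ltac:(lra)). assert (H1 := uni2 c ltac:(lra)). assert (H2 := uni3 c ltac:(lra)).
  assert (E : q1_1 (- (1 - c + c * t)) (c - 1) 1 = ((-8)*c^2) * (1-t)^2 + (2*((-4)*c^2 + (2)*c^3)) * (t * (1-t)) + ((-2)*c^2 + (2)*c^3) * t^2) by (unfold q1_1; field).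
  rewrite E.
  assert (Ha : 0 < (1-t)^2) by (apply pow_lt; lra).
  assert (Hb : 0 <= t * (1-t)) by (apply Rmult_le_pos; lra).
  assert (Hd : 0 <= t^2) by (apply pow_le; lra).
  assert (((-8)*c^2) * (1-t)^2 < 0) by (apply mneg; [lra | lra]).
  assert ((2*((-4)*c^2 + (2)*c^3)) * (t*(1-t)) <= 0) by (apply mnp; [lra | lra]).
  assert (((-2)*c^2 + (2)*c^3) * t^2 <= 0) by (apply mnp; [lra | lra]).
  lra.
Qed.

Lemma uni4 (c : R) : 3/5 <= c <= 1 -> (6)*c + (-28)*c^2 + (10)*c^3 < 0.
Proof.
  intros Hc. set (t := (c - 3/5) * (5/2)). assert (Ht : 0 <= t <= 1) by (unfold t; lra).
  assert (Hct : c = 3/5 + 2/5*t) by (unfold t; field). clearbody t. subst c.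
  assert (E : (1/10) + (6)*(3/5 + 2/5*t) + (-28)*(3/5 + 2/5*t)^2 + (10)*(3/5 + 2/5*t)^3 = ((-211)/(50)) * (t^0 * (1-t)^3) + ((-969)/(50)) * (t^1 * (1-t)^2) + ((-277)/(10)) * (t^2 * (1-t)^1) + ((-119)/(10)) * (t^3 * (1-t)^0)) by field.
  assert (H : (1/10) + (6)*(3/5 + 2/5*t) + (-28)*(3/5 + 2/5*t)^2 + (10)*(3/5 + 2/5*t)^3 <= 0).
  { rewrite E. repeat apply sum_np; apply term_np; lra. }
  lra.
Qed.

Lemma uni5 (c : R) : 3/5 <= c <= 1 -> (3)*c + (-9)*c^2 + (4)*c^3 < 0.
Proof.
  intros Hc. set (t := (c - 3/5) * (5/2)). assert (Ht : 0 <= t <= 1) by (unfold t; lra).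
  assert (Hct : c = 3/5 + 2/5*t) by (unfold t; field). clearbody t. subst c.
  assert (E : (1/10) + (3)*(3/5 + 2/5*t) + (-9)*(3/5 + 2/5*t)^2 + (4)*(3/5 + 2/5*t)^3 = ((-119)/(250)) * (t^0 * (1-t)^3) + ((-141)/(50)) * (t^1 * (1-t)^2) + ((-9)/(2)) * (t^2 * (1-t)^1) + ((-19)/(10)) * (t^3 * (1-t)^0)) by field.
  assert (H : (1/10) + (3)*(3/5 + 2/5*t) + (-9)*(3/5 + 2/5*t)^2 + (4)*(3/5 + 2/5*t)^3 <= 0).
  { rewrite E. repeat apply sum_np; apply term_np; lra. }
  lra.
Qed.

Lemma uni6 (c : R) : 3/5 <= c <= 1 -> (-2)*c^2 + (2)*c^3 <= 0.
Proof.
  intros Hc. set (t := (c - 3/5) * (5/2)). assert (Ht : 0 <= t <= 1) by (unfold t; lra).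
  assert (Hct : c = 3/5 + 2/5*t) by (unfold t; field). clearbody t. subst c.
  assert (E : (-2)*(3/5 + 2/5*t)^2 + (2)*(3/5 + 2/5*t)^3 = ((-36)/(125)) * (t^0 * (1-t)^3) + ((-24)/(25)) * (t^1 * (1-t)^2) + ((-4)/(5)) * (t^2 * (1-t)^1) + ((0)/(1)) * (t^3 * (1-t)^0)) by field.
  assert (H : (-2)*(3/5 + 2/5*t)^2 + (2)*(3/5 + 2/5*t)^3 <= 0).
  { rewrite E. repeat apply sum_np; apply term_np; lra. }
  lra.
Qed.

Lemma I1core_1_3 (W c : R) : 3/5 <= c < 1 -> 1 - c <= W < 1 -> q1_1 (-W) (c-1) 3 < 0.
Proof.
  intros Hc HW. set (t := (W - (1 - c)) / c). assert (Hc0 : 0 < c) by lra.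
  assert (HWt : W = 1 - c + c * t) by (unfold t; field; lra).
  assert (Ht0 : 0 <= t) by (unfold t; apply Rmult_le_pos; [lra| left; apply Rinv_0_lt_compat; lra]).
  assert (Ht1 : t < 1).
  { assert (c * t < c) by lra. nra. }
  clearbody t. subst W.
  assert (H0 := uni4 c ltac:(lra)). assert (H1 := uni5 c ltac:(lra)). assert (H2 := uni6 c ltac:(lra)).
  assert (E : q1_1 (- (1 - c + c * t)) (c - 1) 3 = ((6)*c + (-28)*c^2 + (10)*c^3) * (1-t)^2 + (2*((3)*c + (-9)*c^2 + (4)*c^3)) * (t * (1-t)) + ((-2)*c^2 + (2)*c^3) * t^2) by (unfold q1_1; field).
  rewrite E.
  assert (Ha : 0 < (1-t)^2) by (apply pow_lt; lra).
  assert (Hb : 0 <= t * (1-t)) by (apply Rmult_le_pos; lra).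
  assert (Hd : 0 <= t^2) by (apply pow_le; lra).
  assert (((6)*c + (-28)*c^2 + (10)*c^3) * (1-t)^2 < 0) by (apply mneg; [lra | lra]).
  assert ((2*((3)*c + (-9)*c^2 + (4)*c^3)) * (t*(1-t)) <= 0) by (apply mnp; [lra | lra]).
  assert (((-2)*c^2 + (2)*c^3) * t^2 <= 0) by (apply mnp; [lra | lra]).
  lra.
Qed.

Lemma uni7 (c : R) : 3/5 <= c <= 1 -> (-2) + (-4)*c + (-4)*c^2 + (4)*c^3 + (2)*c^4 < 0.
Proof.
  intros Hc. set (t := (c - 3/5) * (5/2)). assert (Ht : 0 <= t <= 1) by (unfold t; lra).
  assert (Hct : c = 3/5 + 2/5*t) by (unfold t; field). clearbody t. subst c.
  assert (E : (-19/10) + (-4)*(3/5 + 2/5*t) + (-4)*(3/5 + 2/5*t)^2 + (4)*(3/5 + 2/5*t)^3 + (2)*(3/5 + 2/5*t)^4 = ((-5771)/(1250)) * (t^0 * (1-t)^4) + ((-2446)/(125)) * (t^1 * (1-t)^3) + ((-149)/(5)) * (t^2 * (1-t)^2) + ((-94)/(5)) * (t^3 * (1-t)^1) + ((-39)/(10)) * (t^4 * (1-t)^0)) by field.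
  assert (H : (-19/10) + (-4)*(3/5 + 2/5*t) + (-4)*(3/5 + 2/5*t)^2 + (4)*(3/5 + 2/5*t)^3 + (2)*(3/5 + 2/5*t)^4 <= 0).
  { rewrite E. repeat apply sum_np; apply term_np; lra. }
  lra.
Qed.

Lemma uni8 (c : R) : 3/5 <= c <= 1 -> (1/2) + (-5/2)*c + (3/2)*c^2 + (-7/2)*c^3 + (7/2)*c^4 + (5/2)*c^5 + (-3/2)*c^6 + (-1/2)*c^7 <= 0.
Proof.
  intros Hc. set (t := (c - 3/5) * (5/2)). assert (Ht : 0 <= t <= 1) by (unfold t; lra).
  assert (Hct : c = 3/5 + 2/5*t) by (unfold t; field). clearbody t. subst c.
  assert (E : (1/2) + (-5/2)*(3/5 + 2/5*t) + (3/2)*(3/5 + 2/5*t)^2 + (-7/2)*(3/5 + 2/5*t)^3 + (7/2)*(3/5 + 2/5*t)^4 + (5/2)*(3/5 + 2/5*t)^5 + (-3/2)*(3/5 + 2/5*t)^6 + (-1/2)*(3/5 + 2/5*t)^7 = ((-50936)/(78125)) * (t^0 * (1-t)^7) + ((-15136)/(3125)) * (t^1 * (1-t)^6) + ((-45816)/(3125)) * (t^2 * (1-t)^5) + ((-14464)/(625)) * (t^3 * (1-t)^4) + ((-2504)/(125)) * (t^4 * (1-t)^3) + ((-224)/(25)) * (t^5 * (1-t)^2) + ((-8)/(5)) * (t^6 * (1-t)^1) + ((0)/(1)) * (t^7 * (1-t)^0)) by field.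
  assert (H : (1/2) + (-5/2)*(3/5 + 2/5*t) + (3/2)*(3/5 + 2/5*t)^2 + (-7/2)*(3/5 + 2/5*t)^3 + (7/2)*(3/5 + 2/5*t)^4 + (5/2)*(3/5 + 2/5*t)^5 + (-3/2)*(3/5 + 2/5*t)^6 + (-1/2)*(3/5 + 2/5*t)^7 <= 0).
  { rewrite E. repeat apply sum_np; apply term_np; lra. }
  lra.
Qed.

Lemma uni9 (c : R) : 3/5 <= c <= 1 -> (-11/3)*c + (11/3)*c^2 + (-2/3)*c^3 + (2/3)*c^4 + (1/3)*c^5 + (-1/3)*c^6 <= 0.
Proof.
  intros Hc. set (t := (c - 3/5) * (5/2)). assert (Ht : 0 <= t <= 1) by (unfold t; lra).
  assert (Hct : c = 3/5 + 2/5*t) by (unfold t; field). clearbody t. subst c.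
  assert (E : (-11/3)*(3/5 + 2/5*t) + (11/3)*(3/5 + 2/5*t)^2 + (-2/3)*(3/5 + 2/5*t)^3 + (2/3)*(3/5 + 2/5*t)^4 + (1/3)*(3/5 + 2/5*t)^5 + (-1/3)*(3/5 + 2/5*t)^6 = ((-14488)/(15625)) * (t^0 * (1-t)^6) + ((-9944)/(1875)) * (t^1 * (1-t)^5) + ((-22448)/(1875)) * (t^2 * (1-t)^4) + ((-5008)/(375)) * (t^3 * (1-t)^3) + ((-184)/(25)) * (t^4 * (1-t)^2) + ((-8)/(5)) * (t^5 * (1-t)^1) + ((0)/(1)) * (t^6 * (1-t)^0)) by field.
  assert (H : (-11/3)*(3/5 + 2/5*t) + (11/3)*(3/5 + 2/5*t)^2 + (-2/3)*(3/5 + 2/5*t)^3 + (2/3)*(3/5 + 2/5*t)^4 + (1/3)*(3/5 + 2/5*t)^5 + (-1/3)*(3/5 + 2/5*t)^6 <= 0).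
  { rewrite E. repeat apply sum_np; apply term_np; lra. }
  lra.
Qed.

Lemma uni10 (c : R) : 3/5 <= c <= 1 -> (-4)*c + (4)*c^2 <= 0.
Proof.
  intros Hc. set (t := (c - 3/5) * (5/2)). assert (Ht : 0 <= t <= 1) by (unfold t; lra).
  assert (Hct : c = 3/5 + 2/5*t) by (unfold t; field). clearbody t. subst c.
  assert (E : (-4)*(3/5 + 2/5*t) + (4)*(3/5 + 2/5*t)^2 = ((-24)/(25)) * (t^0 * (1-t)^2) + ((-8)/(5)) * (t^1 * (1-t)^1) + ((0)/(1)) * (t^2 * (1-t)^0)) by field.
  assert (H : (-4)*(3/5 + 2/5*t) + (4)*(3/5 + 2/5*t)^2 <= 0).
  { rewrite E. repeat apply sum_np; apply term_np; lra. }
  lra.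
Qed.

Lemma I2core_1_1 (W c : R) : 3/5 <= c < 1 -> c^2 + c - 1 >= 0 -> c^2 <= W <= 1 -> (c^2 < W \/ c^2 + c - 1 > 0) -> p_1 (-W) (c-1) 1 < 0.
Proof.
  intros Hc Hs HW Hor. assert (Hc0 : 0 < c) by lra. assert (Hd : 0 < 1 - c^2) by nra.
  set (t := (W - c^2) / (1 - c^2)).
  assert (HWt : W = c^2 + (1 - c^2) * t) by (unfold t; field; lra).
  assert (Ht0 : 0 <= t) by (unfold t; apply Rmult_le_pos; [lra| left; apply Rinv_0_lt_compat; lra]).
  assert (Ht1 : t <= 1).
  { assert ((1-c^2) * t <= 1 - c^2) by lra. nra. }
  assert (Hor' : 0 < t \/ c^2 + c - 1 > 0).
  { destruct Hor as [Hor|Hor]; [left; unfold t; apply Rdiv_lt_0_compat; lra | right; lra]. }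
  clearbody t. subst W.
  assert (H0 := uni7 c ltac:(lra)). assert (H1 := uni8 c ltac:(lra)). assert (H2 := uni9 c ltac:(lra)). assert (H3 := uni10 c ltac:(lra)).
  assert (E : p_1 (- (c^2 + (1 - c^2) * t)) (c - 1) 1 = ((c^2+c-1)*(1-c)^1*((-2) + (-4)*c + (-4)*c^2 + (4)*c^3 + (2)*c^4)) * (1-t)^4 + (4*((1/2) + (-5/2)*c + (3/2)*c^2 + (-7/2)*c^3 + (7/2)*c^4 + (5/2)*c^5 + (-3/2)*c^6 + (-1/2)*c^7)) * (t * (1-t)^3) + (6*((-11/3)*c + (11/3)*c^2 + (-2/3)*c^3 + (2/3)*c^4 + (1/3)*c^5 + (-1/3)*c^6)) * (t^2 * (1-t)^2) + (4*((-4)*c + (4)*c^2)) * (t^3 * (1-t)) + ((-4)*c + (4)*c^2) * t^4) by (unfold p_1; field).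
  rewrite E.
  assert (Hpk : 0 < (1-c)^1) by (apply pow_lt; lra).
  set (tt := (-2) + (-4)*c + (-4)*c^2 + (4)*c^3 + (2)*c^4) in *.
  assert (Hb4 : (-4)*c + (4)*c^2 < 0) by nra.
  assert (T0 : (c^2+c-1)*(1-c)^1*tt * (1-t)^4 <= 0).
  { apply mnp; [| apply pow_le; lra].
    assert (0 <= (c^2+c-1)*(1-c)^1) by (apply Rmult_le_pos; lra). nra. }
  assert (T1 : (4*((1/2) + (-5/2)*c + (3/2)*c^2 + (-7/2)*c^3 + (7/2)*c^4 + (5/2)*c^5 + (-3/2)*c^6 + (-1/2)*c^7)) * (t * (1-t)^3) <= 0) by (apply mnp; [lra| apply Rmult_le_pos; [lra|apply pow_le; lra]]).
  assert (T2 : (6*((-11/3)*c + (11/3)*c^2 + (-2/3)*c^3 + (2/3)*c^4 + (1/3)*c^5 + (-1/3)*c^6)) * (t^2 * (1-t)^2) <= 0) by (apply mnp; [lra| apply Rmult_le_pos; apply pow_le; lra]).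
  assert (T3 : (4*((-4)*c + (4)*c^2)) * (t^3 * (1-t)) <= 0) by (apply mnp; [lra| apply Rmult_le_pos; [apply pow_le; lra|lra]]).
  assert (T4 : ((-4)*c + (4)*c^2) * t^4 <= 0) by (apply mnp; [lra| apply pow_le; lra]).
  destruct Hor' as [Ht|Hs'].
  - assert (((-4)*c + (4)*c^2) * t^4 < 0) by (apply mneg; [lra| apply pow_lt; lra]). lra.
  - destruct (Rlt_or_le t 1) as [Ht|Ht].
    + assert (0 < (c^2+c-1)*(1-c)^1) by (apply Rmult_lt_0_compat; lra).
      assert ((c^2+c-1)*(1-c)^1*tt < 0) by nra.
      assert ((c^2+c-1)*(1-c)^1*tt * (1-t)^4 < 0) by (apply mneg; [lra| apply pow_lt; lra]). lra.
    + assert (((-4)*c + (4)*c^2) * t^4 < 0) by (apply mneg; [lra| apply pow_lt; lra]). lra.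
Qed.

Lemma uni11 (c : R) : 3/5 <= c <= 1 -> (-6) + (-12)*c + (8)*c^2 + (12)*c^3 + (-6)*c^4 < 0.
Proof.
  intros Hc. set (t := (c - 3/5) * (5/2)). assert (Ht : 0 <= t <= 1) by (unfold t; lra).
  assert (Hct : c = 3/5 + 2/5*t) by (unfold t; field). clearbody t. subst c.
  assert (E : (-59/10) + (-12)*(3/5 + 2/5*t) + (8)*(3/5 + 2/5*t)^2 + (12)*(3/5 + 2/5*t)^3 + (-6)*(3/5 + 2/5*t)^4 = ((-10507)/(1250)) * (t^0 * (1-t)^4) + ((-3934)/(125)) * (t^1 * (1-t)^3) + ((-1033)/(25)) * (t^2 * (1-t)^2) + ((-22)/(1)) * (t^3 * (1-t)^1) + ((-39)/(10)) * (t^4 * (1-t)^0)) by field.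
  assert (H : (-59/10) + (-12)*(3/5 + 2/5*t) + (8)*(3/5 + 2/5*t)^2 + (12)*(3/5 + 2/5*t)^3 + (-6)*(3/5 + 2/5*t)^4 <= 0).
  { rewrite E. repeat apply sum_np; apply term_np; lra. }
  lra.
Qed.

Lemma uni12 (c : R) : 3/5 <= c <= 1 -> (-3/2) + (5/2)*c + (-7/2)*c^2 + (-5/2)*c^3 + (21/2)*c^4 + (-11/2)*c^5 + (-3/2)*c^6 + (3/2)*c^7 <= 0.
Proof.
  intros Hc. set (t := (c - 3/5) * (5/2)). assert (Ht : 0 <= t <= 1) by (unfold t; lra).
  assert (Hct : c = 3/5 + 2/5*t) by (unfold t; field). clearbody t. subst c.
  assert (E : (-3/2) + (5/2)*(3/5 + 2/5*t) + (-7/2)*(3/5 + 2/5*t)^2 + (-5/2)*(3/5 + 2/5*t)^3 + (21/2)*(3/5 + 2/5*t)^4 + (-11/2)*(3/5 + 2/5*t)^5 + (-3/2)*(3/5 + 2/5*t)^6 + (3/2)*(3/5 + 2/5*t)^7 = ((-69912)/(78125)) * (t^0 * (1-t)^7) + ((-92264)/(15625)) * (t^1 * (1-t)^6) + ((-50824)/(3125)) * (t^2 * (1-t)^5) + ((-14912)/(625)) * (t^3 * (1-t)^4) + ((-2456)/(125)) * (t^4 * (1-t)^3) + ((-216)/(25)) * (t^5 * (1-t)^2) + ((-8)/(5)) * (t^6 * (1-t)^1) + ((0)/(1)) * (t^7 * (1-t)^0)) by field.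
  assert (H : (-3/2) + (5/2)*(3/5 + 2/5*t) + (-7/2)*(3/5 + 2/5*t)^2 + (-5/2)*(3/5 + 2/5*t)^3 + (21/2)*(3/5 + 2/5*t)^4 + (-11/2)*(3/5 + 2/5*t)^5 + (-3/2)*(3/5 + 2/5*t)^6 + (3/2)*(3/5 + 2/5*t)^7 <= 0).
  { rewrite E. repeat apply sum_np; apply term_np; lra. }
  lra.
Qed.

Lemma uni13 (c : R) : 3/5 <= c <= 1 -> (-2) + (5/3)*c + (3)*c^2 + (-16/3)*c^3 + (2)*c^4 + (-1/3)*c^5 + (1)*c^6 <= 0.
Proof.
  intros Hc. set (t := (c - 3/5) * (5/2)). assert (Ht : 0 <= t <= 1) by (unfold t; lra).
  assert (Hct : c = 3/5 + 2/5*t) by (unfold t; field). clearbody t. subst c.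
  assert (E : (-2) + (5/3)*(3/5 + 2/5*t) + (3)*(3/5 + 2/5*t)^2 + (-16/3)*(3/5 + 2/5*t)^3 + (2)*(3/5 + 2/5*t)^4 + (-1/3)*(3/5 + 2/5*t)^5 + (1)*(3/5 + 2/5*t)^6 = ((-12376)/(15625)) * (t^0 * (1-t)^6) + ((-38984)/(9375)) * (t^1 * (1-t)^5) + ((-17024)/(1875)) * (t^2 * (1-t)^4) + ((-3904)/(375)) * (t^3 * (1-t)^3) + ((-472)/(75)) * (t^4 * (1-t)^2) + ((-8)/(5)) * (t^5 * (1-t)^1) + ((0)/(1)) * (t^6 * (1-t)^0)) by field.
  assert (H : (-2) + (5/3)*(3/5 + 2/5*t) + (3)*(3/5 + 2/5*t)^2 + (-16/3)*(3/5 + 2/5*t)^3 + (2)*(3/5 + 2/5*t)^4 + (-1/3)*(3/5 + 2/5*t)^5 + (1)*(3/5 + 2/5*t)^6 <= 0).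
  { rewrite E. repeat apply sum_np; apply term_np; lra. }
  lra.
Qed.

Lemma uni14 (c : R) : 3/5 <= c <= 1 -> (-1)*c + (1)*c^2 + (-3)*c^3 + (3)*c^4 <= 0.
Proof.
  intros Hc. set (t := (c - 3/5) * (5/2)). assert (Ht : 0 <= t <= 1) by (unfold t; lra).
  assert (Hct : c = 3/5 + 2/5*t) by (unfold t; field). clearbody t. subst c.
  assert (E : (-1)*(3/5 + 2/5*t) + (1)*(3/5 + 2/5*t)^2 + (-3)*(3/5 + 2/5*t)^3 + (3)*(3/5 + 2/5*t)^4 = ((-312)/(625)) * (t^0 * (1-t)^4) + ((-272)/(125)) * (t^1 * (1-t)^3) + ((-16)/(5)) * (t^2 * (1-t)^2) + ((-8)/(5)) * (t^3 * (1-t)^1) + ((0)/(1)) * (t^4 * (1-t)^0)) by field.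
  assert (H : (-1)*(3/5 + 2/5*t) + (1)*(3/5 + 2/5*t)^2 + (-3)*(3/5 + 2/5*t)^3 + (3)*(3/5 + 2/5*t)^4 <= 0).
  { rewrite E. repeat apply sum_np; apply term_np; lra. }
  lra.
Qed.

Lemma I2core_1_3 (W c : R) : 3/5 <= c < 1 -> c^2 + c - 1 >= 0 -> c^2 <= W <= 1 -> (c^2 < W \/ c^2 + c - 1 > 0) -> p_1 (-W) (c-1) 3 < 0.
Proof.
  intros Hc Hs HW Hor. assert (Hc0 : 0 < c) by lra. assert (Hd : 0 < 1 - c^2) by nra.
  set (t := (W - c^2) / (1 - c^2)).
  assert (HWt : W = c^2 + (1 - c^2) * t) by (unfold t; field; lra).
  assert (Ht0 : 0 <= t) by (unfold t; apply Rmult_le_pos; [lra| left; apply Rinv_0_lt_compat; lra]).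
  assert (Ht1 : t <= 1).
  { assert ((1-c^2) * t <= 1 - c^2) by lra. nra. }
  assert (Hor' : 0 < t \/ c^2 + c - 1 > 0).
  { destruct Hor as [Hor|Hor]; [left; unfold t; apply Rdiv_lt_0_compat; lra | right; lra]. }
  clearbody t. subst W.
  assert (H0 := uni11 c ltac:(lra)). assert (H1 := uni12 c ltac:(lra)). assert (H2 := uni13 c ltac:(lra)). assert (H3 := uni14 c ltac:(lra)).
  assert (E : p_1 (- (c^2 + (1 - c^2) * t)) (c - 1) 3 = ((c^2+c-1)*(1-c)^1*((-6) + (-12)*c + (8)*c^2 + (12)*c^3 + (-6)*c^4)) * (1-t)^4 + (4*((-3/2) + (5/2)*c + (-7/2)*c^2 + (-5/2)*c^3 + (21/2)*c^4 + (-11/2)*c^5 + (-3/2)*c^6 + (3/2)*c^7)) * (t * (1-t)^3) + (6*((-2) + (5/3)*c + (3)*c^2 + (-16/3)*c^3 + (2)*c^4 + (-1/3)*c^5 + (1)*c^6)) * (t^2 * (1-t)^2) + (4*((-1)*c + (1)*c^2 + (-3)*c^3 + (3)*c^4)) * (t^3 * (1-t)) + ((-4)*c + (4)*c^2) * t^4) by (unfold p_1; field).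
  rewrite E.
  assert (Hpk : 0 < (1-c)^1) by (apply pow_lt; lra).
  set (tt := (-6) + (-12)*c + (8)*c^2 + (12)*c^3 + (-6)*c^4) in *.
  assert (Hb4 : (-4)*c + (4)*c^2 < 0) by nra.
  assert (T0 : (c^2+c-1)*(1-c)^1*tt * (1-t)^4 <= 0).
  { apply mnp; [| apply pow_le; lra].
    assert (0 <= (c^2+c-1)*(1-c)^1) by (apply Rmult_le_pos; lra). nra. }
  assert (T1 : (4*((-3/2) + (5/2)*c + (-7/2)*c^2 + (-5/2)*c^3 + (21/2)*c^4 + (-11/2)*c^5 + (-3/2)*c^6 + (3/2)*c^7)) * (t * (1-t)^3) <= 0) by (apply mnp; [lra| apply Rmult_le_pos; [lra|apply pow_le; lra]]).
  assert (T2 : (6*((-2) + (5/3)*c + (3)*c^2 + (-16/3)*c^3 + (2)*c^4 + (-1/3)*c^5 + (1)*c^6)) * (t^2 * (1-t)^2) <= 0) by (apply mnp; [lra| apply Rmult_le_pos; apply pow_le; lra]).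
  assert (T3 : (4*((-1)*c + (1)*c^2 + (-3)*c^3 + (3)*c^4)) * (t^3 * (1-t)) <= 0) by (apply mnp; [lra| apply Rmult_le_pos; [apply pow_le; lra|lra]]).
  assert (T4 : ((-4)*c + (4)*c^2) * t^4 <= 0) by (apply mnp; [lra| apply pow_le; lra]).
  destruct Hor' as [Ht|Hs'].
  - assert (((-4)*c + (4)*c^2) * t^4 < 0) by (apply mneg; [lra| apply pow_lt; lra]). lra.
  - destruct (Rlt_or_le t 1) as [Ht|Ht].
    + assert (0 < (c^2+c-1)*(1-c)^1) by (apply Rmult_lt_0_compat; lra).
      assert ((c^2+c-1)*(1-c)^1*tt < 0) by nra.
      assert ((c^2+c-1)*(1-c)^1*tt * (1-t)^4 < 0) by (apply mneg; [lra| apply pow_lt; lra]). lra.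
    + assert (((-4)*c + (4)*c^2) * t^4 < 0) by (apply mneg; [lra| apply pow_lt; lra]). lra.
Qed.

Definition q1_2 (V u g : R) : R := (2)*V^2*u*g^2 + (-4)*V^2*u*g + (-4)*V^2*g + (2)*V*u^2*g + (2)*V*u*g^2 + (-4)*V*u*g + (-4)*V*u + (-8)*V*g + (-4)*V + (4)*u^3 + (2)*u^2*g + (8)*u^2 + (-4)*g + (-4).

Definition p_2 (V u g : R) : R := (-4)*V^3*u*g^2 + (10)*V^3*u*g + (-4)*V^3*u + (8)*V^3*g + (-4)*V^3 + (4)*V^2*u^2*g^2 + (-8)*V^2*u^2*g + (-4)*V^2*u*g^2 + (12)*V^2*u*g + (-8)*V^2*u + (16)*V^2*g + (-8)*V^2 + (4)*V*u^2*g^2 + (-12)*V*u^2*g + (-4)*V*u*g + (8)*V*g + (-4)*u^2*g + (8)*u^2 + (-6)*u*g + (12)*u + (4).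

Lemma uni15 (c : R) : 3/5 <= c <= 1 -> (-12)*c^2 + (4)*c^3 < 0.
Proof.
  intros Hc. set (t := (c - 3/5) * (5/2)). assert (Ht : 0 <= t <= 1) by (unfold t; lra).
  assert (Hct : c = 3/5 + 2/5*t) by (unfold t; field). clearbody t. subst c.
  assert (E : (1/10) + (-12)*(3/5 + 2/5*t)^2 + (4)*(3/5 + 2/5*t)^3 = ((-839)/(250)) * (t^0 * (1-t)^3) + ((-141)/(10)) * (t^1 * (1-t)^2) + ((-189)/(10)) * (t^2 * (1-t)^1) + ((-79)/(10)) * (t^3 * (1-t)^0)) by field.
  assert (H : (1/10) + (-12)*(3/5 + 2/5*t)^2 + (4)*(3/5 + 2/5*t)^3 <= 0).
  { rewrite E. repeat apply sum_np; apply term_np; lra. }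
  lra.
Qed.

Lemma uni16 (c : R) : 3/5 <= c <= 1 -> (-7)*c^2 + (5)*c^3 < 0.
Proof.
  intros Hc. set (t := (c - 3/5) * (5/2)). assert (Ht : 0 <= t <= 1) by (unfold t; lra).
  assert (Hct : c = 3/5 + 2/5*t) by (unfold t; field). clearbody t. subst c.
  assert (E : (1/10) + (-7)*(3/5 + 2/5*t)^2 + (5)*(3/5 + 2/5*t)^3 = ((-67)/(50)) * (t^0 * (1-t)^3) + ((-261)/(50)) * (t^1 * (1-t)^2) + ((-61)/(10)) * (t^2 * (1-t)^1) + ((-19)/(10)) * (t^3 * (1-t)^0)) by field.
  assert (H : (1/10) + (-7)*(3/5 + 2/5*t)^2 + (5)*(3/5 + 2/5*t)^3 <= 0).
  { rewrite E. repeat apply sum_np; apply term_np; lra. }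
  lra.
Qed.

Lemma uni17 (c : R) : 3/5 <= c <= 1 -> (-4)*c^2 + (4)*c^3 <= 0.
Proof.
  intros Hc. set (t := (c - 3/5) * (5/2)). assert (Ht : 0 <= t <= 1) by (unfold t; lra).
  assert (Hct : c = 3/5 + 2/5*t) by (unfold t; field). clearbody t. subst c.
  assert (E : (-4)*(3/5 + 2/5*t)^2 + (4)*(3/5 + 2/5*t)^3 = ((-72)/(125)) * (t^0 * (1-t)^3) + ((-48)/(25)) * (t^1 * (1-t)^2) + ((-8)/(5)) * (t^2 * (1-t)^1) + ((0)/(1)) * (t^3 * (1-t)^0)) by field.
  assert (H : (-4)*(3/5 + 2/5*t)^2 + (4)*(3/5 + 2/5*t)^3 <= 0).
  { rewrite E. repeat apply sum_np; apply term_np; lra. }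
  lra.
Qed.

Lemma I1core_2_1 (W c : R) : 3/5 <= c < 1 -> 1 - c <= W < 1 -> q1_2 (-W) (c-1) 1 < 0.
Proof.
  intros Hc HW. set (t := (W - (1 - c)) / c). assert (Hc0 : 0 < c) by lra.
  assert (HWt : W = 1 - c + c * t) by (unfold t; field; lra).
  assert (Ht0 : 0 <= t) by (unfold t; apply Rmult_le_pos; [lra| left; apply Rinv_0_lt_compat; lra]).
  assert (Ht1 : t < 1).
  { assert (c * t < c) by lra. nra. }
  clearbody t. subst W.
  assert (H0 := uni15 c ltac:(lra)). assert (H1 := uni16 c ltac:(lra)). assert (H2 := uni17 c ltac:(lra)).
  assert (E : q1_2 (- (1 - c + c * t)) (c - 1) 1 = ((-12)*c^2 + (4)*c^3) * (1-t)^2 + (2*((-7)*c^2 + (5)*c^3)) * (t * (1-t)) + ((-4)*c^2 + (4)*c^3) * t^2) by (unfold q1_2; field).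
  rewrite E.
  assert (Ha : 0 < (1-t)^2) by (apply pow_lt; lra).
  assert (Hb : 0 <= t * (1-t)) by (apply Rmult_le_pos; lra).
  assert (Hd : 0 <= t^2) by (apply pow_le; lra).
  assert (((-12)*c^2 + (4)*c^3) * (1-t)^2 < 0) by (apply mneg; [lra | lra]).
  assert ((2*((-7)*c^2 + (5)*c^3)) * (t*(1-t)) <= 0) by (apply mnp; [lra | lra]).
  assert (((-4)*c^2 + (4)*c^3) * t^2 <= 0) by (apply mnp; [lra | lra]).
  lra.
Qed.

Lemma uni18 (c : R) : 3/5 <= c <= 1 -> (12)*c + (-44)*c^2 + (16)*c^3 < 0.
Proof.
  intros Hc. set (t := (c - 3/5) * (5/2)). assert (Ht : 0 <= t <= 1) by (unfold t; lra).
  assert (Hct : c = 3/5 + 2/5*t) by (unfold t; field). clearbody t. subst c.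
  assert (E : (1/10) + (12)*(3/5 + 2/5*t) + (-44)*(3/5 + 2/5*t)^2 + (16)*(3/5 + 2/5*t)^3 = ((-1271)/(250)) * (t^0 * (1-t)^3) + ((-1233)/(50)) * (t^1 * (1-t)^2) + ((-73)/(2)) * (t^2 * (1-t)^1) + ((-159)/(10)) * (t^3 * (1-t)^0)) by field.
  assert (H : (1/10) + (12)*(3/5 + 2/5*t) + (-44)*(3/5 + 2/5*t)^2 + (16)*(3/5 + 2/5*t)^3 <= 0).
  { rewrite E. repeat apply sum_np; apply term_np; lra. }
  lra.
Qed.

Lemma uni19 (c : R) : 3/5 <= c <= 1 -> (6)*c + (-15)*c^2 + (7)*c^3 < 0.
Proof.
  intros Hc. set (t := (c - 3/5) * (5/2)). assert (Ht : 0 <= t <= 1) by (unfold t; lra).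
  assert (Hct : c = 3/5 + 2/5*t) by (unfold t; field). clearbody t. subst c.
  assert (E : (1/10) + (6)*(3/5 + 2/5*t) + (-15)*(3/5 + 2/5*t)^2 + (7)*(3/5 + 2/5*t)^3 = ((-47)/(250)) * (t^0 * (1-t)^3) + ((-117)/(50)) * (t^1 * (1-t)^2) + ((-9)/(2)) * (t^2 * (1-t)^1) + ((-19)/(10)) * (t^3 * (1-t)^0)) by field.
  assert (H : (1/10) + (6)*(3/5 + 2/5*t) + (-15)*(3/5 + 2/5*t)^2 + (7)*(3/5 + 2/5*t)^3 <= 0).
  { rewrite E. repeat apply sum_np; apply term_np; lra. }
  lra.
Qed.

Lemma uni20 (c : R) : 3/5 <= c <= 1 -> (-4)*c^2 + (4)*c^3 <= 0.
Proof.
  intros Hc. set (t := (c - 3/5) * (5/2)). assert (Ht : 0 <= t <= 1) by (unfold t; lra).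
  assert (Hct : c = 3/5 + 2/5*t) by (unfold t; field). clearbody t. subst c.
  assert (E : (-4)*(3/5 + 2/5*t)^2 + (4)*(3/5 + 2/5*t)^3 = ((-72)/(125)) * (t^0 * (1-t)^3) + ((-48)/(25)) * (t^1 * (1-t)^2) + ((-8)/(5)) * (t^2 * (1-t)^1) + ((0)/(1)) * (t^3 * (1-t)^0)) by field.
  assert (H : (-4)*(3/5 + 2/5*t)^2 + (4)*(3/5 + 2/5*t)^3 <= 0).
  { rewrite E. repeat apply sum_np; apply term_np; lra. }
  lra.
Qed.

Lemma I1core_2_3 (W c : R) : 3/5 <= c < 1 -> 1 - c <= W < 1 -> q1_2 (-W) (c-1) 3 < 0.
Proof.
  intros Hc HW. set (t := (W - (1 - c)) / c). assert (Hc0 : 0 < c) by lra.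
  assert (HWt : W = 1 - c + c * t) by (unfold t; field; lra).
  assert (Ht0 : 0 <= t) by (unfold t; apply Rmult_le_pos; [lra| left; apply Rinv_0_lt_compat; lra]).
  assert (Ht1 : t < 1).
  { assert (c * t < c) by lra. nra. }
  clearbody t. subst W.
  assert (H0 := uni18 c ltac:(lra)). assert (H1 := uni19 c ltac:(lra)). assert (H2 := uni20 c ltac:(lra)).
  assert (E : q1_2 (- (1 - c + c * t)) (c - 1) 3 = ((12)*c + (-44)*c^2 + (16)*c^3) * (1-t)^2 + (2*((6)*c + (-15)*c^2 + (7)*c^3)) * (t * (1-t)) + ((-4)*c^2 + (4)*c^3) * t^2) by (unfold q1_2; field).
  rewrite E.
  assert (Ha : 0 < (1-t)^2) by (apply pow_lt; lra).
  assert (Hb : 0 <= t * (1-t)) by (apply Rmult_le_pos; lra).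
  assert (Hd : 0 <= t^2) by (apply pow_le; lra).
  assert (((12)*c + (-44)*c^2 + (16)*c^3) * (1-t)^2 < 0) by (apply mneg; [lra | lra]).
  assert ((2*((6)*c + (-15)*c^2 + (7)*c^3)) * (t*(1-t)) <= 0) by (apply mnp; [lra | lra]).
  assert (((-4)*c^2 + (4)*c^3) * t^2 <= 0) by (apply mnp; [lra | lra]).
  lra.
Qed.

Lemma uni21 (c : R) : 3/5 <= c <= 1 -> (-2) + (-4)*c + (-8)*c^2 + (-2)*c^3 < 0.
Proof.
  intros Hc. set (t := (c - 3/5) * (5/2)). assert (Ht : 0 <= t <= 1) by (unfold t; lra).
  assert (Hct : c = 3/5 + 2/5*t) by (unfold t; field). clearbody t. subst c.
  assert (E : (-19/10) + (-4)*(3/5 + 2/5*t) + (-8)*(3/5 + 2/5*t)^2 + (-2)*(3/5 + 2/5*t)^3 = ((-1903)/(250)) * (t^0 * (1-t)^3) + ((-1457)/(50)) * (t^1 * (1-t)^2) + ((-373)/(10)) * (t^2 * (1-t)^1) + ((-159)/(10)) * (t^3 * (1-t)^0)) by field.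
  assert (H : (-19/10) + (-4)*(3/5 + 2/5*t) + (-8)*(3/5 + 2/5*t)^2 + (-2)*(3/5 + 2/5*t)^3 <= 0).
  { rewrite E. repeat apply sum_np; apply term_np; lra. }
  lra.
Qed.

Lemma uni22 (c : R) : 3/5 <= c <= 1 -> (1) + (-5)*c + (5)*c^2 + (-5)*c^3 + (9/2)*c^4 + (5/2)*c^5 + (-5/2)*c^6 + (-1/2)*c^7 <= 0.
Proof.
  intros Hc. set (t := (c - 3/5) * (5/2)). assert (Ht : 0 <= t <= 1) by (unfold t; lra).
  assert (Hct : c = 3/5 + 2/5*t) by (unfold t; field). clearbody t. subst c.
  assert (E : (1) + (-5)*(3/5 + 2/5*t) + (5)*(3/5 + 2/5*t)^2 + (-5)*(3/5 + 2/5*t)^3 + (9/2)*(3/5 + 2/5*t)^4 + (5/2)*(3/5 + 2/5*t)^5 + (-5/2)*(3/5 + 2/5*t)^6 + (-1/2)*(3/5 + 2/5*t)^7 = ((-49456)/(78125)) * (t^0 * (1-t)^7) + ((-70624)/(15625)) * (t^1 * (1-t)^6) + ((-40484)/(3125)) * (t^2 * (1-t)^5) + ((-11888)/(625)) * (t^3 * (1-t)^4) + ((-1864)/(125)) * (t^4 * (1-t)^3) + ((-144)/(25)) * (t^5 * (1-t)^2) + ((-4)/(5)) * (t^6 * (1-t)^1) + ((0)/(1)) * (t^7 * (1-t)^0)) by field.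
  assert (H : (1) + (-5)*(3/5 + 2/5*t) + (5)*(3/5 + 2/5*t)^2 + (-5)*(3/5 + 2/5*t)^3 + (9/2)*(3/5 + 2/5*t)^4 + (5/2)*(3/5 + 2/5*t)^5 + (-5/2)*(3/5 + 2/5*t)^6 + (-1/2)*(3/5 + 2/5*t)^7 <= 0).
  { rewrite E. repeat apply sum_np; apply term_np; lra. }
  lra.
Qed.

Lemma uni23 (c : R) : 3/5 <= c <= 1 -> (2/3) + (-20/3)*c + (7)*c^2 + (-5/3)*c^3 + (1)*c^4 + (1/3)*c^5 + (-2/3)*c^6 <= 0.
Proof.
  intros Hc. set (t := (c - 3/5) * (5/2)). assert (Ht : 0 <= t <= 1) by (unfold t; lra).
  assert (Hct : c = 3/5 + 2/5*t) by (unfold t; field). clearbody t. subst c.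
  assert (E : (2/3) + (-20/3)*(3/5 + 2/5*t) + (7)*(3/5 + 2/5*t)^2 + (-5/3)*(3/5 + 2/5*t)^3 + (1)*(3/5 + 2/5*t)^4 + (1/3)*(3/5 + 2/5*t)^5 + (-2/3)*(3/5 + 2/5*t)^6 = ((-49168)/(46875)) * (t^0 * (1-t)^6) + ((-56368)/(9375)) * (t^1 * (1-t)^5) + ((-25192)/(1875)) * (t^2 * (1-t)^4) + ((-1832)/(125)) * (t^3 * (1-t)^3) + ((-584)/(75)) * (t^4 * (1-t)^2) + ((-8)/(5)) * (t^5 * (1-t)^1) + ((0)/(1)) * (t^6 * (1-t)^0)) by field.
  assert (H : (2/3) + (-20/3)*(3/5 + 2/5*t) + (7)*(3/5 + 2/5*t)^2 + (-5/3)*(3/5 + 2/5*t)^3 + (1)*(3/5 + 2/5*t)^4 + (1/3)*(3/5 + 2/5*t)^5 + (-2/3)*(3/5 + 2/5*t)^6 <= 0).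
  { rewrite E. repeat apply sum_np; apply term_np; lra. }
  lra.
Qed.

Lemma uni24 (c : R) : 3/5 <= c <= 1 -> (1/2) + (-15/2)*c + (15/2)*c^2 + (-1/2)*c^3 <= 0.
Proof.
  intros Hc. set (t := (c - 3/5) * (5/2)). assert (Ht : 0 <= t <= 1) by (unfold t; lra).
  assert (Hct : c = 3/5 + 2/5*t) by (unfold t; field). clearbody t. subst c.
  assert (E : (1/2) + (-15/2)*(3/5 + 2/5*t) + (15/2)*(3/5 + 2/5*t)^2 + (-1/2)*(3/5 + 2/5*t)^3 = ((-176)/(125)) * (t^0 * (1-t)^3) + ((-96)/(25)) * (t^1 * (1-t)^2) + ((-12)/(5)) * (t^2 * (1-t)^1) + ((0)/(1)) * (t^3 * (1-t)^0)) by field.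
  assert (H : (1/2) + (-15/2)*(3/5 + 2/5*t) + (15/2)*(3/5 + 2/5*t)^2 + (-1/2)*(3/5 + 2/5*t)^3 <= 0).
  { rewrite E. repeat apply sum_np; apply term_np; lra. }
  lra.
Qed.

Lemma I2core_2_1 (W c : R) : 3/5 <= c < 1 -> c^2 + c - 1 >= 0 -> c^2 <= W <= 1 -> (c^2 < W \/ c^2 + c - 1 > 0) -> p_2 (-W) (c-1) 1 < 0.
Proof.
  intros Hc Hs HW Hor. assert (Hc0 : 0 < c) by lra. assert (Hd : 0 < 1 - c^2) by nra.
  set (t := (W - c^2) / (1 - c^2)).
  assert (HWt : W = c^2 + (1 - c^2) * t) by (unfold t; field; lra).
  assert (Ht0 : 0 <= t) by (unfold t; apply Rmult_le_pos; [lra| left; apply Rinv_0_lt_compat; lra]).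
  assert (Ht1 : t <= 1).
  { assert ((1-c^2) * t <= 1 - c^2) by lra. nra. }
  assert (Hor' : 0 < t \/ c^2 + c - 1 > 0).
  { destruct Hor as [Hor|Hor]; [left; unfold t; apply Rdiv_lt_0_compat; lra | right; lra]. }
  clearbody t. subst W.
  assert (H0 := uni21 c ltac:(lra)). assert (H1 := uni22 c ltac:(lra)). assert (H2 := uni23 c ltac:(lra)). assert (H3 := uni24 c ltac:(lra)).
  assert (E : p_2 (- (c^2 + (1 - c^2) * t)) (c - 1) 1 = ((c^2+c-1)*(1-c)^2*((-2) + (-4)*c + (-8)*c^2 + (-2)*c^3)) * (1-t)^4 + (4*((1) + (-5)*c + (5)*c^2 + (-5)*c^3 + (9/2)*c^4 + (5/2)*c^5 + (-5/2)*c^6 + (-1/2)*c^7)) * (t * (1-t)^3) + (6*((2/3) + (-20/3)*c + (7)*c^2 + (-5/3)*c^3 + (1)*c^4 + (1/3)*c^5 + (-2/3)*c^6)) * (t^2 * (1-t)^2) + (4*((1/2) + (-15/2)*c + (15/2)*c^2 + (-1/2)*c^3)) * (t^3 * (1-t)) + ((-8)*c + (8)*c^2) * t^4) by (unfold p_2; field).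
  rewrite E.
  assert (Hpk : 0 < (1-c)^2) by (apply pow_lt; lra).
  set (tt := (-2) + (-4)*c + (-8)*c^2 + (-2)*c^3) in *.
  assert (Hb4 : (-8)*c + (8)*c^2 < 0) by nra.
  assert (T0 : (c^2+c-1)*(1-c)^2*tt * (1-t)^4 <= 0).
  { apply mnp; [| apply pow_le; lra].
    assert (0 <= (c^2+c-1)*(1-c)^2) by (apply Rmult_le_pos; lra). nra. }
  assert (T1 : (4*((1) + (-5)*c + (5)*c^2 + (-5)*c^3 + (9/2)*c^4 + (5/2)*c^5 + (-5/2)*c^6 + (-1/2)*c^7)) * (t * (1-t)^3) <= 0) by (apply mnp; [lra| apply Rmult_le_pos; [lra|apply pow_le; lra]]).
  assert (T2 : (6*((2/3) + (-20/3)*c + (7)*c^2 + (-5/3)*c^3 + (1)*c^4 + (1/3)*c^5 + (-2/3)*c^6)) * (t^2 * (1-t)^2) <= 0) by (apply mnp; [lra| apply Rmult_le_pos; apply pow_le; lra]).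
  assert (T3 : (4*((1/2) + (-15/2)*c + (15/2)*c^2 + (-1/2)*c^3)) * (t^3 * (1-t)) <= 0) by (apply mnp; [lra| apply Rmult_le_pos; [apply pow_le; lra|lra]]).
  assert (T4 : ((-8)*c + (8)*c^2) * t^4 <= 0) by (apply mnp; [lra| apply pow_le; lra]).
  destruct Hor' as [Ht|Hs'].
  - assert (((-8)*c + (8)*c^2) * t^4 < 0) by (apply mneg; [lra| apply pow_lt; lra]). lra.
  - destruct (Rlt_or_le t 1) as [Ht|Ht].
    + assert (0 < (c^2+c-1)*(1-c)^2) by (apply Rmult_lt_0_compat; lra).
      assert ((c^2+c-1)*(1-c)^2*tt < 0) by nra.
      assert ((c^2+c-1)*(1-c)^2*tt * (1-t)^4 < 0) by (apply mneg; [lra| apply pow_lt; lra]). lra.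
    + assert (((-8)*c + (8)*c^2) * t^4 < 0) by (apply mneg; [lra| apply pow_lt; lra]). lra.
Qed.

Lemma uni25 (c : R) : 3/5 <= c <= 1 -> (-6) + (-20)*c + (-8)*c^2 + (10)*c^3 < 0.
Proof.
  intros Hc. set (t := (c - 3/5) * (5/2)). assert (Ht : 0 <= t <= 1) by (unfold t; lra).
  assert (Hct : c = 3/5 + 2/5*t) by (unfold t; field). clearbody t. subst c.
  assert (E : (-59/10) + (-20)*(3/5 + 2/5*t) + (-8)*(3/5 + 2/5*t)^2 + (10)*(3/5 + 2/5*t)^3 = ((-931)/(50)) * (t^0 * (1-t)^3) + ((-3169)/(50)) * (t^1 * (1-t)^2) + ((-693)/(10)) * (t^2 * (1-t)^1) + ((-239)/(10)) * (t^3 * (1-t)^0)) by field.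
  assert (H : (-59/10) + (-20)*(3/5 + 2/5*t) + (-8)*(3/5 + 2/5*t)^2 + (10)*(3/5 + 2/5*t)^3 <= 0).
  { rewrite E. repeat apply sum_np; apply term_np; lra. }
  lra.
Qed.

Lemma uni26 (c : R) : 3/5 <= c <= 1 -> (-3) + (5)*c + (-1)*c^2 + (-7)*c^3 + (27/2)*c^4 + (-17/2)*c^5 + (-3/2)*c^6 + (5/2)*c^7 <= 0.
Proof.
  intros Hc. set (t := (c - 3/5) * (5/2)). assert (Ht : 0 <= t <= 1) by (unfold t; lra).
  assert (Hct : c = 3/5 + 2/5*t) by (unfold t; field). clearbody t. subst c.
  assert (E : (-3) + (5)*(3/5 + 2/5*t) + (-1)*(3/5 + 2/5*t)^2 + (-7)*(3/5 + 2/5*t)^3 + (27/2)*(3/5 + 2/5*t)^4 + (-17/2)*(3/5 + 2/5*t)^5 + (-3/2)*(3/5 + 2/5*t)^6 + (5/2)*(3/5 + 2/5*t)^7 = ((-2448)/(3125)) * (t^0 * (1-t)^7) + ((-69976)/(15625)) * (t^1 * (1-t)^6) + ((-6676)/(625)) * (t^2 * (1-t)^5) + ((-8544)/(625)) * (t^3 * (1-t)^4) + ((-1256)/(125)) * (t^4 * (1-t)^3) + ((-104)/(25)) * (t^5 * (1-t)^2) + ((-4)/(5)) * (t^6 * (1-t)^1) + ((0)/(1)) * (t^7 * (1-t)^0)) by field.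
  assert (H : (-3) + (5)*(3/5 + 2/5*t) + (-1)*(3/5 + 2/5*t)^2 + (-7)*(3/5 + 2/5*t)^3 + (27/2)*(3/5 + 2/5*t)^4 + (-17/2)*(3/5 + 2/5*t)^5 + (-3/2)*(3/5 + 2/5*t)^6 + (5/2)*(3/5 + 2/5*t)^7 <= 0).
  { rewrite E. repeat apply sum_np; apply term_np; lra. }
  lra.
Qed.

Lemma uni27 (c : R) : 3/5 <= c <= 1 -> (-2) + (8/3)*c + (5)*c^2 + (-31/3)*c^3 + (3)*c^4 + (-1/3)*c^5 + (2)*c^6 <= 0.
Proof.
  intros Hc. set (t := (c - 3/5) * (5/2)). assert (Ht : 0 <= t <= 1) by (unfold t; lra).
  assert (Hct : c = 3/5 + 2/5*t) by (unfold t; field). clearbody t. subst c.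
  assert (E : (-2) + (8/3)*(3/5 + 2/5*t) + (5)*(3/5 + 2/5*t)^2 + (-31/3)*(3/5 + 2/5*t)^3 + (3)*(3/5 + 2/5*t)^4 + (-1/3)*(3/5 + 2/5*t)^5 + (2)*(3/5 + 2/5*t)^6 = ((-5872)/(15625)) * (t^0 * (1-t)^6) + ((-3616)/(1875)) * (t^1 * (1-t)^5) + ((-8696)/(1875)) * (t^2 * (1-t)^4) + ((-488)/(75)) * (t^3 * (1-t)^3) + ((-376)/(75)) * (t^4 * (1-t)^2) + ((-8)/(5)) * (t^5 * (1-t)^1) + ((0)/(1)) * (t^6 * (1-t)^0)) by field.
  assert (H : (-2) + (8/3)*(3/5 + 2/5*t) + (5)*(3/5 + 2/5*t)^2 + (-31/3)*(3/5 + 2/5*t)^3 + (3)*(3/5 + 2/5*t)^4 + (-1/3)*(3/5 + 2/5*t)^5 + (2)*(3/5 + 2/5*t)^6 <= 0).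
  { rewrite E. repeat apply sum_np; apply term_np; lra. }
  lra.
Qed.

Lemma uni28 (c : R) : 3/5 <= c <= 1 -> (3/2) + (-5/2)*c + (1/2)*c^2 + (-11/2)*c^3 + (6)*c^4 <= 0.
Proof.
  intros Hc. set (t := (c - 3/5) * (5/2)). assert (Ht : 0 <= t <= 1) by (unfold t; lra).
  assert (Hct : c = 3/5 + 2/5*t) by (unfold t; field). clearbody t. subst c.
  assert (E : (3/2) + (-5/2)*(3/5 + 2/5*t) + (1/2)*(3/5 + 2/5*t)^2 + (-11/2)*(3/5 + 2/5*t)^3 + (6)*(3/5 + 2/5*t)^4 = ((-144)/(625)) * (t^0 * (1-t)^4) + ((-248)/(125)) * (t^1 * (1-t)^3) + ((-4)/(1)) * (t^2 * (1-t)^2) + ((-12)/(5)) * (t^3 * (1-t)^1) + ((0)/(1)) * (t^4 * (1-t)^0)) by field.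
  assert (H : (3/2) + (-5/2)*(3/5 + 2/5*t) + (1/2)*(3/5 + 2/5*t)^2 + (-11/2)*(3/5 + 2/5*t)^3 + (6)*(3/5 + 2/5*t)^4 <= 0).
  { rewrite E. repeat apply sum_np; apply term_np; lra. }
  lra.
Qed.

Lemma I2core_2_3 (W c : R) : 3/5 <= c < 1 -> c^2 + c - 1 >= 0 -> c^2 <= W <= 1 -> (c^2 < W \/ c^2 + c - 1 > 0) -> p_2 (-W) (c-1) 3 < 0.
Proof.
  intros Hc Hs HW Hor. assert (Hc0 : 0 < c) by lra. assert (Hd : 0 < 1 - c^2) by nra.
  set (t := (W - c^2) / (1 - c^2)).
  assert (HWt : W = c^2 + (1 - c^2) * t) by (unfold t; field; lra).
  assert (Ht0 : 0 <= t) by (unfold t; apply Rmult_le_pos; [lra| left; apply Rinv_0_lt_compat; lra]).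
  assert (Ht1 : t <= 1).
  { assert ((1-c^2) * t <= 1 - c^2) by lra. nra. }
  assert (Hor' : 0 < t \/ c^2 + c - 1 > 0).
  { destruct Hor as [Hor|Hor]; [left; unfold t; apply Rdiv_lt_0_compat; lra | right; lra]. }
  clearbody t. subst W.
  assert (H0 := uni25 c ltac:(lra)). assert (H1 := uni26 c ltac:(lra)). assert (H2 := uni27 c ltac:(lra)). assert (H3 := uni28 c ltac:(lra)).
  assert (E : p_2 (- (c^2 + (1 - c^2) * t)) (c - 1) 3 = ((c^2+c-1)*(1-c)^2*((-6) + (-20)*c + (-8)*c^2 + (10)*c^3)) * (1-t)^4 + (4*((-3) + (5)*c + (-1)*c^2 + (-7)*c^3 + (27/2)*c^4 + (-17/2)*c^5 + (-3/2)*c^6 + (5/2)*c^7)) * (t * (1-t)^3) + (6*((-2) + (8/3)*c + (5)*c^2 + (-31/3)*c^3 + (3)*c^4 + (-1/3)*c^5 + (2)*c^6)) * (t^2 * (1-t)^2) + (4*((3/2) + (-5/2)*c + (1/2)*c^2 + (-11/2)*c^3 + (6)*c^4)) * (t^3 * (1-t)) + ((-8)*c + (8)*c^2) * t^4) by (unfold p_2; field).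
  rewrite E.
  assert (Hpk : 0 < (1-c)^2) by (apply pow_lt; lra).
  set (tt := (-6) + (-20)*c + (-8)*c^2 + (10)*c^3) in *.
  assert (Hb4 : (-8)*c + (8)*c^2 < 0) by nra.
  assert (T0 : (c^2+c-1)*(1-c)^2*tt * (1-t)^4 <= 0).
  { apply mnp; [| apply pow_le; lra].
    assert (0 <= (c^2+c-1)*(1-c)^2) by (apply Rmult_le_pos; lra). nra. }
  assert (T1 : (4*((-3) + (5)*c + (-1)*c^2 + (-7)*c^3 + (27/2)*c^4 + (-17/2)*c^5 + (-3/2)*c^6 + (5/2)*c^7)) * (t * (1-t)^3) <= 0) by (apply mnp; [lra| apply Rmult_le_pos; [lra|apply pow_le; lra]]).
  assert (T2 : (6*((-2) + (8/3)*c + (5)*c^2 + (-31/3)*c^3 + (3)*c^4 + (-1/3)*c^5 + (2)*c^6)) * (t^2 * (1-t)^2) <= 0) by (apply mnp; [lra| apply Rmult_le_pos; apply pow_le; lra]).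
  assert (T3 : (4*((3/2) + (-5/2)*c + (1/2)*c^2 + (-11/2)*c^3 + (6)*c^4)) * (t^3 * (1-t)) <= 0) by (apply mnp; [lra| apply Rmult_le_pos; [apply pow_le; lra|lra]]).
  assert (T4 : ((-8)*c + (8)*c^2) * t^4 <= 0) by (apply mnp; [lra| apply pow_le; lra]).
  destruct Hor' as [Ht|Hs'].
  - assert (((-8)*c + (8)*c^2) * t^4 < 0) by (apply mneg; [lra| apply pow_lt; lra]). lra.
  - destruct (Rlt_or_le t 1) as [Ht|Ht].
    + assert (0 < (c^2+c-1)*(1-c)^2) by (apply Rmult_lt_0_compat; lra).
      assert ((c^2+c-1)*(1-c)^2*tt < 0) by nra.
      assert ((c^2+c-1)*(1-c)^2*tt * (1-t)^4 < 0) by (apply mneg; [lra| apply pow_lt; lra]). lra.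
    + assert (((-8)*c + (8)*c^2) * t^4 < 0) by (apply mneg; [lra| apply pow_lt; lra]). lra.
Qed.


Lemma I1poly_1 V u g : 1 <= g <= 3 -> -2/5 <= u < 0 -> -1 < V < u -> q1_1 V u g < 0.
Proof.
  intros Hg Hu HV.
  assert (A1 := I1core_1_1 (-V) (1+u) ltac:(lra) ltac:(lra)).
  assert (A3 := I1core_1_3 (-V) (1+u) ltac:(lra) ltac:(lra)).
  replace (- - V) with V in A1, A3 by ring. replace (1 + u - 1) with u in A1, A3 by ring.
  assert (E : q1_1 V u g = ((3-g)*q1_1 V u 1 + (g-1)*q1_1 V u 3)/2 + (u*V*(V+1))*((g-1)*(g-3))) by (unfold q1_1; field).
  rewrite E.
  assert (0 <= u*V) by nra. assert (0 <= u*V*(V+1)) by (apply Rmult_le_pos; lra).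
  assert ((u*V*(V+1))*((g-1)*(g-3)) <= 0) by (assert ((g-1)*(g-3) <= 0) by nra; rewrite Rmult_comm; apply mnp; lra).
  nra.
Qed.

Lemma I1poly_2 V u g : 1 <= g <= 3 -> -2/5 <= u < 0 -> -1 < V < u -> q1_2 V u g < 0.
Proof.
  intros Hg Hu HV.
  assert (A1 := I1core_2_1 (-V) (1+u) ltac:(lra) ltac:(lra)).
  assert (A3 := I1core_2_3 (-V) (1+u) ltac:(lra) ltac:(lra)).
  replace (- - V) with V in A1, A3 by ring. replace (1 + u - 1) with u in A1, A3 by ring.
  assert (E : q1_2 V u g = ((3-g)*q1_2 V u 1 + (g-1)*q1_2 V u 3)/2 + (2*u*V*(V+1))*((g-1)*(g-3))) by (unfold q1_2; field).
  rewrite E.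
  assert (0 <= u*V) by nra. assert (0 <= 2*u*V*(V+1)) by (replace (2*u*V*(V+1)) with (2*(u*V)*(V+1)) by ring; apply Rmult_le_pos; lra).
  assert ((2*u*V*(V+1))*((g-1)*(g-3)) <= 0) by (assert ((g-1)*(g-3) <= 0) by nra; rewrite Rmult_comm; apply mnp; lra).
  nra.
Qed.

Lemma I2poly_1 V u g : 1 <= g <= 3 -> -2/5 <= u < 0 -> u^2+3*u+1 >= 0 -> -1 <= V <= -(1+u)^2 ->
  (V < -(1+u)^2 \/ u^2+3*u+1 > 0) -> p_1 V u g < 0.
Proof.
  intros Hg Hu Hs HV Hor.
  assert (Hc : (1+u)^2 + (1+u) - 1 = u^2+3*u+1) by ring.
  assert (A1 := I2core_1_1 (-V) (1+u) ltac:(lra) ltac:(lra) ltac:(lra) ltac:(lra)).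
  assert (A3 := I2core_1_3 (-V) (1+u) ltac:(lra) ltac:(lra) ltac:(lra) ltac:(lra)).
  replace (- - V) with V in A1, A3 by ring. replace (1 + u - 1) with u in A1, A3 by ring.
  assert (E : p_1 V u g = ((3-g)*p_1 V u 1 + (g-1)*p_1 V u 3)/2 + (2*u*V*(u-V)*(1+V))*((g-1)*(g-3))) by (unfold p_1; field).
  rewrite E.
  assert (HV0 : V < 0) by nra. assert (HuV : V <= u) by nra.
  assert (0 <= 2*u*V*(u-V)*(1+V)).
  { assert (0 <= u*V) by nra. assert (0 <= (u-V)*(1+V)) by (apply Rmult_le_pos; lra). nra. }
  assert ((2*u*V*(u-V)*(1+V))*((g-1)*(g-3)) <= 0) by (assert ((g-1)*(g-3) <= 0) by nra; rewrite Rmult_comm; apply mnp; lra).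
  nra.
Qed.

Lemma I2poly_2 V u g : 1 <= g <= 3 -> -2/5 <= u < 0 -> u^2+3*u+1 >= 0 -> -1 <= V <= -(1+u)^2 ->
  (V < -(1+u)^2 \/ u^2+3*u+1 > 0) -> p_2 V u g < 0.
Proof.
  intros Hg Hu Hs HV Hor.
  assert (Hc : (1+u)^2 + (1+u) - 1 = u^2+3*u+1) by ring.
  assert (A1 := I2core_2_1 (-V) (1+u) ltac:(lra) ltac:(lra) ltac:(lra) ltac:(lra)).
  assert (A3 := I2core_2_3 (-V) (1+u) ltac:(lra) ltac:(lra) ltac:(lra) ltac:(lra)).
  replace (- - V) with V in A1, A3 by ring. replace (1 + u - 1) with u in A1, A3 by ring.
  assert (E : p_2 V u g = ((3-g)*p_2 V u 1 + (g-1)*p_2 V u 3)/2 + (4*u*V*(u-V)*(1+V))*((g-1)*(g-3))) by (unfold p_2; field).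
  rewrite E.
  assert (HV0 : V < 0) by nra. assert (HuV : V <= u) by nra.
  assert (0 <= 4*u*V*(u-V)*(1+V)).
  { assert (0 <= u*V) by nra. assert (0 <= (u-V)*(1+V)) by (apply Rmult_le_pos; lra). nra. }
  assert ((4*u*V*(u-V)*(1+V))*((g-1)*(g-3)) <= 0) by (assert ((g-1)*(g-3) <= 0) by nra; rewrite Rmult_comm; apply mnp; lra).
  nra.
Qed.


Ltac fside := repeat split; try lra; try nra.

Lemma I1def m g z u x : (m = 1 \/ m = 2) -> 1 < g < 3 -> -2/5 <= u < 0 -> 0 < 2-(g-2)*u ->
  z = -u*(1+u)/(2-(g-2)*u) -> -1 < x < u -> 0 < Ff m g z x (1+u).
Proof.
  intros Hm Hg Hu HD Hz Hx.
  destruct Hm as [Hm|Hm]; subst m.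
  - assert (E : Ff 1 g z x (1+u) = (1+u)*(x-u)*q1_1 x u g/(2*(1+x)*(2-(g-2)*u))).
    { unfold Ff, a1, a2, a3, q1_1. rewrite Hz. field. fside. }
    rewrite E. assert (q1_1 x u g < 0) by (apply I1poly_1; lra).
    apply Rdiv_lt_0_compat; [|nra]. assert (0 < (1+u)*(u-x)) by (apply Rmult_lt_0_compat; lra). nra.
  - assert (E : Ff 2 g z x (1+u) = (1+u)*(x-u)*q1_2 x u g/(2*(1+x)*(2-(g-2)*u))).
    { unfold Ff, a1, a2, a3, q1_2. rewrite Hz. field. fside. }
    rewrite E. assert (q1_2 x u g < 0) by (apply I1poly_2; lra).
    apply Rdiv_lt_0_compat; [|nra]. assert (0 < (1+u)*(u-x)) by (apply Rmult_lt_0_compat; lra). nra.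
Qed.

Lemma I2def m g z u x C : (m = 1 \/ m = 2) -> 1 < g < 3 -> -2/5 <= u < 0 -> u^2+3*u+1 >= 0 ->
  0 < 2-(g-2)*u -> z = -u*(1+u)/(2-(g-2)*u) -> -1 < x <= -(1+u)^2 ->
  (x < -(1+u)^2 \/ u^2+3*u+1 > 0) -> C^2 = -x ->
  0 < 2 * C * Ff m g z x C + Gf m g z x C.
Proof.
  intros Hm Hg Hu Hs HD Hz Hx Hor HC.
  assert (Ex : 2 * C * Ff m g z x C + Gf m g z x C =
    2*(C^2)*(C^2*(1+m*z/(1+x)) - a1 m g*(1+x)^2 + a2 m g z*(1+x) - a3 m g z)
    + (C^2*((m+1)*x+2*m*z) - x*(1+x)*(lam m g z+x))) by (unfold Ff, Gf; ring).
  rewrite Ex, HC. clear Ex.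
  assert (Hx0 : x < 0) by nra.
  destruct Hm as [Hm|Hm]; subst m.
  - assert (E : 2 * - x * (- x * (1 + 1 * z / (1 + x)) - a1 1 g * (1 + x) ^ 2 + a2 1 g z * (1 + x) - a3 1 g z) +
      (- x * ((1 + 1) * x + 2 * 1 * z) - x * (1 + x) * (lam 1 g z + x)) = x * p_1 x u g / (2*(1+x)*(2-(g-2)*u))).
    { unfold a1, a2, a3, lam, p_1. rewrite Hz. field. fside. }
    rewrite E. assert (p_1 x u g < 0) by (apply I2poly_1; lra).
    apply Rdiv_lt_0_compat; nra.
  - assert (E : 2 * - x * (- x * (1 + 2 * z / (1 + x)) - a1 2 g * (1 + x) ^ 2 + a2 2 g z * (1 + x) - a3 2 g z) +
      (- x * ((2 + 1) * x + 2 * 2 * z) - x * (1 + x) * (lam 2 g z + x)) = x * p_2 x u g / (2*(1+x)*(2-(g-2)*u))).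
    { unfold a1, a2, a3, lam, p_2. rewrite Hz. field. fside. }
    rewrite E. assert (p_2 x u g < 0) by (apply I2poly_2; lra).
    apply Rdiv_lt_0_compat; nra.
Qed.

Lemma GVpos m g z u : (m = 1 \/ m = 2) -> 1 < g < 3 -> -2/5 <= u < 0 -> 0 < 2-(g-2)*u ->
  z = -u*(1+u)/(2-(g-2)*u) ->
  0 < (1+u)^2*(m+1) - ((1+u)*(lam m g z+u) + u*(lam m g z+u) + u*(1+u)).
Proof.
  intros Hm Hg Hu HD Hz.
  destruct Hm as [Hm|Hm]; subst m.
  - assert (E : (1+u)^2*(1+1) - ((1+u)*(lam 1 g z+u) + u*(lam 1 g z+u) + u*(1+u)) = (1+u)*((3*g-2)*u^2+2)/(2-(g-2)*u))
      by (unfold lam; rewrite Hz; field; fside).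
    rewrite E. apply Rdiv_lt_0_compat; [apply Rmult_lt_0_compat; nra | lra].
  - assert (E : (1+u)^2*(2+1) - ((1+u)*(lam 2 g z+u) + u*(lam 2 g z+u) + u*(1+u)) = 4*(1+u)*(g*u^2+1+u)/(2-(g-2)*u))
      by (unfold lam; rewrite Hz; field; fside).
    rewrite E. apply Rdiv_lt_0_compat; [apply Rmult_lt_0_compat; nra | lra].
Qed.

Lemma GCneg m g z u : (m = 1 \/ m = 2) -> 1 < g < 3 -> -2/5 <= u < 0 -> 0 < 2-(g-2)*u ->
  z = -u*(1+u)/(2-(g-2)*u) -> 2*(1+u)*((m+1)*u+2*m*z) < 0.
Proof.
  intros Hm Hg Hu HD Hz.
  destruct Hm as [Hm|Hm]; subst m.
  - assert (E : 2*(1+u)*((1+1)*u+2*1*z) = 2*(1+u)*u*(2-2*(g-1)*u)/(2-(g-2)*u)) by (rewrite Hz; field; fside).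
    rewrite E. apply Rdiv_neg_pos; [|lra]. assert (0 < 2-2*(g-1)*u) by nra.
    assert (0 < (1+u)*(2-2*(g-1)*u)) by (apply Rmult_lt_0_compat; lra). nra.
  - assert (E : 2*(1+u)*((2+1)*u+2*2*z) = 2*(1+u)*u*(2-(3*g-2)*u)/(2-(g-2)*u)) by (rewrite Hz; field; fside).
    rewrite E. apply Rdiv_neg_pos; [|lra]. assert (0 < 2-(3*g-2)*u) by nra.
    assert (0 < (1+u)*(2-(3*g-2)*u)) by (apply Rmult_lt_0_compat; lra). nra.
Qed.

Lemma G8zero m g z u : u^2 + u*(1-(g-2)*z) + 2*z = 0 -> Gf m g z u (1+u) = 0.
Proof.
  intros H. unfold Gf, lam.
  replace ((1 + u) ^ 2 * ((m + 1) * u + 2 * m * z) - u * (1 + u) * (1 + m * g * z + u))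
    with ((1+u)*m*(u^2 + u*(1-(g-2)*z) + 2*z)) by ring.
  rewrite H. ring.
Qed.

Lemma F8zero m g z u : -2/5 <= u < 0 -> u^2 + u*(1-(g-2)*z) + 2*z = 0 -> Ff m g z u (1+u) = 0.
Proof.
  intros Hu H.
  assert (E : Ff m g z u (1+u) = (1+u)*(-m*(g-1)/2)*(u^2 + u*(1-(g-2)*z) + 2*z)).
  { unfold Ff, a1, a2, a3. field. lra. }
  rewrite E, H. ring.
Qed.

Lemma corner m g z u c : (m = 1 \/ m = 2) -> 1 < g < 3 -> -2/5 <= u < 0 -> u^2+3*u+1 = 0 ->
  0 < 2-(g-2)*u -> z = -u*(1+u)/(2-(g-2)*u) -> c < 0 ->
  - (2*(1+u)*((m+1)*u+2*m*z)) * c^2 +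
  ((((1+u)^2*(1+m*z/(1+u)) - a1 m g*(1+u)^2 + a2 m g z*(1+u) - a3 m g z) + (1+u)*(2*(1+u)*(1+m*z/(1+u))))
   - ((1+u)^2*(m+1) - ((1+u)*(lam m g z+u) + u*(lam m g z+u) + u*(1+u)))) * c
  + (1+u)*((1+u)^2*(-(m*z)/(1+u)^2) - a1 m g*2*(1+u) + a2 m g z) = 0 ->
  2*(1+u)*c + 1 < 0.
Proof.
  intros Hm Hg Hu Hs HD Hz Hc Hq.
  assert (Hua : u < -38/100) by nra. assert (Hub : -383/1000 < u) by nra.
  assert (HA : 0 < - (2*(1+u)*((m+1)*u+2*m*z))).
  { assert (H := GCneg m g z u Hm Hg Hu HD Hz). lra. }
  set (A := - (2*(1+u)*((m+1)*u+2*m*z))) in *.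
  set (B := (((1+u)^2*(1+m*z/(1+u)) - a1 m g*(1+u)^2 + a2 m g z*(1+u) - a3 m g z) + (1+u)*(2*(1+u)*(1+m*z/(1+u))))
   - ((1+u)^2*(m+1) - ((1+u)*(lam m g z+u) + u*(lam m g z+u) + u*(1+u)))) in *.
  set (F := (1+u)*((1+u)^2*(-(m*z)/(1+u)^2) - a1 m g*2*(1+u) + a2 m g z)) in *.
  set (s0 := - / (2*(1+u))).
  assert (Hs0 : s0 < 0) by (unfold s0; assert (0 < / (2*(1+u))) by (apply Rinv_0_lt_compat; lra); lra).
  assert (Hs0e : 2*(1+u)*s0 + 1 = 0) by (unfold s0; field; lra).
  assert (HF : F < 0 /\ A * s0^2 + B * s0 + F < 0).
  { unfold A, B, F, s0, lam, a1, a2, a3. rewrite Hz.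
    destruct Hm as [Hm|Hm]; subst m.
    - split.
      + match goal with |- ?X < 0 => assert (E : X = ((1)*u^3*g^2 + (1)*u^3*g + (-2)*u^3 + (1)*u^2*g^2 + (1)*u^2*g + (-10)*u^2 + (-2)*u*g + (-14)*u + (-2)*g + (-6)) / (2*(2-(g-2)*u))) by (field; fside) end.
        rewrite E. apply Rdiv_neg_pos; [|lra].
        assert (E2 : (1)*u^3*g^2 + (1)*u^3*g + (-2)*u^3 + (1)*u^2*g^2 + (1)*u^2*g + (-10)*u^2 + (-2)*u*g + (-14)*u + (-2)*g + (-6) = ((1)*u*g^2 + (1)*u*g + (-2)*u + (-2)*g^2 + (-2)*g + (-4)) * (u^2+3*u+1) + ((5)*u*g^2 + (3)*u*g + (2)*g^2 + (-2))) by ring.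
        rewrite E2, Hs. nra.
      + match goal with |- ?X < 0 => assert (E : X = ((4)*u^5*g^2 + (4)*u^5*g + (-8)*u^5 + (12)*u^4*g^2 + (32)*u^4*g + (-72)*u^4 + (12)*u^3*g^2 + (60)*u^3*g + (-208)*u^3 + (4)*u^2*g^2 + (24)*u^2*g + (-264)*u^2 + (-16)*u*g + (-152)*u + (-8)*g + (-32)) / (8*(1+u)^2*(2-(g-2)*u))) by (field; fside) end.
        rewrite E. apply Rdiv_neg_pos; [|nra].
        assert (E2 : (4)*u^5*g^2 + (4)*u^5*g + (-8)*u^5 + (12)*u^4*g^2 + (32)*u^4*g + (-72)*u^4 + (12)*u^3*g^2 + (60)*u^3*g + (-208)*u^3 + (4)*u^2*g^2 + (24)*u^2*g + (-264)*u^2 + (-16)*u*g + (-152)*u + (-8)*g + (-32) = ((4)*u^3*g^2 + (4)*u^3*g + (-8)*u^3 + (20)*u^2*g + (-48)*u^2 + (8)*u*g^2 + (-4)*u*g + (-56)*u + (-20)*g^2 + (16)*g + (-48)) * (u^2+3*u+1) + ((52)*u*g^2 + (-60)*u*g + (48)*u + (20)*g^2 + (-24)*g + (16))) by ring.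
        rewrite E2, Hs. nra.
    - split.
      + match goal with |- ?X < 0 => assert (E : X = ((2)*u^3*g^2 + (-2)*u^3*g + (4)*u^3 + (2)*u^2*g^2 + (-6)*u^2*g + (4)*u^2 + (-8)*u*g + (-4)*u + (-4)*g + (-4)) / (2*(2-(g-2)*u))) by (field; fside) end.
        rewrite E. apply Rdiv_neg_pos; [|lra].
        assert (E2 : (2)*u^3*g^2 + (-2)*u^3*g + (4)*u^3 + (2)*u^2*g^2 + (-6)*u^2*g + (4)*u^2 + (-8)*u*g + (-4)*u + (-4)*g + (-4) = ((2)*u*g^2 + (-2)*u*g + (4)*u + (-4)*g^2 + (-8)) * (u^2+3*u+1) + ((10)*u*g^2 + (-6)*u*g + (16)*u + (4)*g^2 + (-4)*g + (4))) by ring.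
        rewrite E2, Hs. nra.
      + match goal with |- ?X < 0 => assert (E : X = ((8)*u^5*g^2 + (-8)*u^5*g + (16)*u^5 + (24)*u^4*g^2 + (-16)*u^4*g + (48)*u^4 + (24)*u^3*g^2 + (-20)*u^3*g + (24)*u^3 + (8)*u^2*g^2 + (-52)*u^2*g + (-48)*u^2 + (-56)*u*g + (-56)*u + (-16)*g + (-16)) / (8*(1+u)^2*(2-(g-2)*u))) by (field; fside) end.
        rewrite E. apply Rdiv_neg_pos; [|nra].
        assert (E2 : (8)*u^5*g^2 + (-8)*u^5*g + (16)*u^5 + (24)*u^4*g^2 + (-16)*u^4*g + (48)*u^4 + (24)*u^3*g^2 + (-20)*u^3*g + (24)*u^3 + (8)*u^2*g^2 + (-52)*u^2*g + (-48)*u^2 + (-56)*u*g + (-56)*u + (-16)*g + (-16) = ((8)*u^3*g^2 + (-8)*u^3*g + (16)*u^3 + (8)*u^2*g + (16)*u*g^2 + (-36)*u*g + (8)*u + (-40)*g^2 + (48)*g + (-72)) * (u^2+3*u+1) + ((104)*u*g^2 + (-164)*u*g + (152)*u + (40)*g^2 + (-64)*g + (56))) by ring.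
        rewrite E2, Hs. nra. }
  destruct HF as [HF Hps].
  assert (Hcs : c < s0).
  { destruct (Rlt_or_le c s0) as [H|H]; auto. exfalso.
    assert (Eid : s0 * (A*c^2 + B*c + F) - c * (A*s0^2 + B*s0 + F) - (s0 - c) * F = A*c*s0*(c - s0)) by ring.
    assert (Hq' : A*c^2 + B*c + F = 0) by lra.
    rewrite Hq' in Eid.
    assert (0 <= A*c*s0*(c-s0)).
    { assert (0 < c * s0) by nra. assert (0 <= c * s0 * (c - s0)) by nra. nra. }
    assert (- c * (A*s0^2 + B*s0 + F) < 0) by nra.
    assert (0 <= (s0 - c) * F) by nra.
    nra. }
  nra.
Qed.


Lemma der_shift (C : R -> R) k x d : is_derive C x d -> is_derive (fun t => C t - k) x d.
Proof.
  intros H. auto_derive. eexists; eauto.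
  replace (Derive (fun x0 : R => C x0) x) with d by (symmetry; apply is_derive_unique; exact H). ring.
Qed.

Lemma key (m g z : R) (C : R -> R) : (m = 1 \/ m = 2) -> 1 < g <= gamma1 -> 0 < z <= z1 g ->
  is_P8_solution m g z C -> C (Vpt1 g) > Cpt1 g.
Proof.
  intros Hm [Hg1 Hg2] Hz HP.
  destruct sqrt2_facts as [H2s [H2a H2b]].
  assert (Hg3 : g < 2415/1000) by (unfold gamma1 in Hg2; lra).
  destruct (P8_facts g z (conj Hg1 Hg3) Hz) as [Hrel [Hu [Hs [HD Hzu]]]].
  assert (Hc8 : Cpt8 g z = 1 + Vpt8 g z) by reflexivity.
  destruct HP as [_ [HC8 [[c [[Hc Hq] HdC]] [Hpos [Hode Hlim]]]]].
  unfold G_V, G_C, F_V, F_C in Hq. rewrite Hc8 in Hq, HC8.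
  set (u := Vpt8 g z) in *.
  set (V1 := Vpt1 g) in *.
  assert (HV1 : V1 = -(2/(g+1))) by reflexivity.
  assert (HV1a : -1 < V1).
  { rewrite HV1. assert (2/(g+1) < 1); [|lra]. apply (Rmult_lt_reg_r (g+1)); [lra|].
    field_simplify; lra. }
  assert (HV1b : V1 < -1/2).
  { rewrite HV1. assert (1/2 < 2/(g+1)); [|lra]. apply (Rmult_lt_reg_r (g+1)); [lra|].
    field_simplify; lra. }
  assert (Hg : 1 < g < 3) by lra.
  assert (Hu1 : 1 + u <> 0) by lra.
  replace (Derive (fun V : R => Gf m g z V (1 + u)) u) with
    ((1+u)^2*(m+1) - ((1+u)*(lam m g z+u) + u*(lam m g z+u) + u*(1+u))) in Hq
    by (symmetry; apply is_derive_unique; apply dG_V).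
  replace (Derive (fun C : R => Gf m g z u C) (1 + u)) with (2*(1+u)*((m+1)*u+2*m*z)) in Hq
    by (symmetry; apply is_derive_unique; apply dG_C).
  replace (Derive (fun V : R => Ff m g z V (1 + u)) u) with
    ((1+u)*((1+u)^2*(-(m*z)/(1+u)^2) - a1 m g*2*(1+u) + a2 m g z)) in Hq
    by (symmetry; apply is_derive_unique; apply dF_V; auto).
  replace (Derive (fun C : R => Ff m g z u C) (1 + u)) with
    (((1+u)^2*(1+m*z/(1+u)) - a1 m g*(1+u)^2 + a2 m g z*(1+u) - a3 m g z) + (1+u)*(2*(1+u)*(1+m*z/(1+u)))) in Hq
    by (symmetry; apply is_derive_unique; apply dF_C; auto).
  assert (HGV := GVpos m g z u Hm Hg Hu HD Hzu).
  assert (HGC := GCneg m g z u Hm Hg Hu HD Hzu).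
  assert (Hphid := dphi m g z C u c HdC). rewrite HC8 in Hphid.
  assert (Hphi0 : Gf m g z u (C u) = 0) by (rewrite HC8; apply G8zero; auto).
  destruct (deriv_pos_left _ _ _ Hphid) as [eta0 [Heta0 Hleft]].
  { assert (0 < 2 * (1 + u) * ((m + 1) * u + 2 * m * z) * c) by nra. nra. }
  assert (Hder : forall x, V1 < x < u -> is_derive C x (Ff m g z x (C x) / Gf m g z x (C x))).
  { intros x Hx. apply Hode. auto. }
  assert (HGnz : forall x, V1 < x < u -> Gf m g z x (C x) <> 0).
  { intros x Hx. apply Hode. auto. }
  assert (Hneg : forall x, V1 < x < u -> Gf m g z x (C x) < 0).
  { intros x Hx.
    set (y := (Rmax x (u - eta0) + u) / 2).
    assert (Hm1 : x <= Rmax x (u - eta0)) by apply Rmax_l.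
    assert (Hm2 : u - eta0 <= Rmax x (u - eta0)) by apply Rmax_r.
    assert (Hm3 : Rmax x (u - eta0) < u) by (apply Rmax_lub_lt; lra).
    assert (Hy : x < y < u) by (unfold y; lra).
    assert (Hyneg : Gf m g z y (C y) < 0).
    { rewrite <- Hphi0. apply Hleft. unfold y; lra. }
    assert (Hb := barrierD (fun t => - Gf m g z t (C t)) V1 y ltac:(lra)).
    assert (0 < - Gf m g z x (C x)); [|lra].
    apply Hb; [| lra | | lra].
    - intros t Ht. eexists. apply (is_derive_opp (fun t => Gf m g z t (C t))). apply dphi. apply Hder. lra.
    - intros t Ht Ht0. exfalso. apply (HGnz t); [lra|]. lra. }
  assert (HI1 : forall x, -1 < x < u -> 0 < Ff m g z x (1+u)).
  { intros x Hx. apply (I1def m g z u x Hm Hg Hu HD Hzu Hx). }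
  set (Vt := -(1+u)^2).
  assert (HVt : Vt <= u) by (unfold Vt; nra).
  assert (P1 : forall x, Rmax V1 Vt < x < u -> 0 < C x - (1+u)).
  { intros x0 Hxx0. apply (barrierD (fun t => C t - (1+u)) (Rmax V1 Vt) u); [lra| | | |exact Hxx0].
    - intros x Hx. destruct (Rle_lt_or_eq_dec x u (proj2 Hx)) as [Hxu|Hxu].
      + eexists. apply der_shift. apply Hder.
        split; [|lra]. apply Rle_lt_trans with (Rmax V1 Vt); [apply Rmax_l|lra].
      + subst x. eexists. apply der_shift. exact HdC.
    - rewrite HC8. lra.
    - intros x Hx Hx0.
      assert (HV1x : V1 < x) by (apply Rle_lt_trans with (Rmax V1 Vt); [apply Rmax_l|lra]).
      destruct (Rle_lt_or_eq_dec x u (proj2 Hx)) as [Hxu|Hxu].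
      + replace (Derive (fun t : R => C t - (1 + u)) x) with (Ff m g z x (C x) / Gf m g z x (C x))
          by (symmetry; apply is_derive_unique; apply der_shift; apply Hder; lra).
        assert (HCx : C x = 1 + u) by lra. rewrite HCx.
        assert (0 < Ff m g z x (1+u)) by (apply HI1; lra).
        assert (Gf m g z x (1+u) < 0) by (rewrite <- HCx; apply Hneg; lra).
        apply Rdiv_pos_neg; auto.
      + subst x. replace (Derive (fun t : R => C t - (1 + u)) u) with c
          by (symmetry; apply is_derive_unique; apply der_shift; exact HdC).
        lra. }
  assert (HC1 : 0 <= Cpt1 g /\ Cpt1 g ^ 2 <= - V1).
  { unfold Cpt1. rewrite HV1.
    assert (Hq0 : 0 <= 2 * g * (g - 1)) by nra.
    assert (Hsq : sqrt (2 * g * (g - 1)) * sqrt (2 * g * (g - 1)) = 2 * g * (g - 1)) by (apply sqrt_sqrt; auto).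
    assert (Hsq0 : 0 <= sqrt (2 * g * (g - 1))) by apply sqrt_pos.
    split. apply Rmult_le_pos; [auto| left; apply Rinv_0_lt_compat; lra].
    assert (Hgg : g * (g - 1) <= g + 1).
    { unfold gamma1 in Hg2. assert ((g-1)^2 <= 2) by nra. nra. }
    set (X := 2 * g * (g - 1)) in *. set (sq := sqrt X) in *.
    replace ((sq / (g + 1)) ^ 2) with ((sq * sq) / (g + 1) ^ 2) by (field; lra).
    rewrite Hsq. unfold X.
    apply (Rmult_le_reg_r ((g+1)^2)); [nra|].
    replace (2 * g * (g - 1) / (g + 1) ^ 2 * (g + 1) ^ 2) with (2 * g * (g - 1)) by (field; lra).
    replace (- - (2 / (g + 1)) * (g + 1) ^ 2) with (2 * (g + 1)) by (field; lra). nra. }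
  destruct HC1 as [HC1a HC1b].
  set (Cx := fun x => if Rle_dec x V1 then C V1 else C x).
  assert (HCx : continuous Cx V1) by (apply ext_cont; exact Hlim).
  assert (HV1p : 0 < C V1) by (apply Hpos; lra).
  destruct (Rle_or_lt Vt V1) as [HA|HB].
  -
    assert (HmaxA : Rmax V1 Vt = V1) by (apply Rmax_left; lra).
    rewrite HmaxA in P1.
    assert (HD1 : 0 < C V1 - (1+u)).
    { apply (endpoint (fun t => C t - (1+u)) (fun t => Ff m g z t (C t) / Gf m g z t (C t)) V1 u); [lra| | | |].
      - intros x Hx. apply der_shift. apply Hder. auto.
      - intros x Hx. apply P1. auto.
      - apply (lim_right_ext C (fun x y => y - (1+u)) V1). apply cont_D1. exact HCx.
      - intros H0.
        assert (HCV1 : C V1 = 1 + u) by lra.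
        destruct (ev_pos_right C (fun x y => Ff m g z x y) V1) as [eta [Heta Hev]].
        + apply (cont_F m g z Cx V1 HCx). lra.
        + rewrite HCV1. apply HI1. lra.
        + exists (Rmin eta (u - V1)). split. apply Rmin_glb_lt; lra.
          intros x Hx.
          assert (Hx1 : x < V1 + eta) by (assert (Rmin eta (u - V1) <= eta) by apply Rmin_l; lra).
          assert (Hx2 : x < u) by (assert (Rmin eta (u - V1) <= u - V1) by apply Rmin_r; lra).
          apply Rdiv_pos_neg. apply Hev. lra. apply Hneg. lra. }
    assert (Hc1u : Cpt1 g <= 1 + u).
    { assert (Cpt1 g ^ 2 <= (1+u)^2) by (unfold Vt in HA; lra). nra. }
    lra.
  -
    assert (HmaxB : Rmax V1 Vt = Vt) by (apply Rmax_right; lra).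
    rewrite HmaxB in P1.
    assert (HCt : 1 + u <= C Vt).
    { destruct (Rle_lt_or_eq_dec Vt u HVt) as [Hlt|Heq].
      - destruct (Rle_or_lt (1+u) (C Vt)) as [H|H]; auto. exfalso.
        assert (Hcd : continuous (fun t => C t - (1+u)) Vt).
        { apply cont_D1. apply (@ex_derive_continuous R_AbsRing R_NormedModule). eexists. apply Hder. lra. }
        destruct (cont_neg _ Vt Hcd ltac:(simpl; lra)) as [d [Hd Hn]].
        set (y := Vt + Rmin d (u - Vt) / 2).
        assert (0 < Rmin d (u - Vt)) by (apply Rmin_glb_lt; lra).
        assert (Rmin d (u - Vt) <= d) by apply Rmin_l. assert (Rmin d (u - Vt) <= u - Vt) by apply Rmin_r.
        assert (Hy1 : (fun t => C t - (1+u)) y < 0) by (apply Hn; unfold y; rewrite Rabs_right; lra).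
        assert (Hy2 : 0 < C y - (1+u)) by (apply P1; unfold y; lra).
        simpl in Hy1. lra.
      - rewrite Heq, HC8. lra. }
    assert (P2 : forall x, V1 < x < Vt -> 0 < C x ^ 2 + x).
    { intros x0 Hxx0. apply (barrierD (fun t => C t ^ 2 + t) V1 Vt); [lra| | | |exact Hxx0].
      - intros x Hx. destruct (Rle_lt_or_eq_dec x u (Rle_trans _ _ _ (proj2 Hx) HVt)) as [Hxu|Hxu].
        + eexists. apply dsq. apply Hder. lra.
        + subst x. eexists. apply dsq. exact HdC.
      - assert (0 <= 1 + u) by lra. unfold Vt in *. nra.
      - intros x Hx Hx0.
        destruct (Rle_lt_or_eq_dec x u (Rle_trans _ _ _ (proj2 Hx) HVt)) as [Hxu|Hxu].
        + replace (Derive (fun t : R => C t ^ 2 + t) x) with (2 * C x * (Ff m g z x (C x) / Gf m g z x (C x)) + 1)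
            by (symmetry; apply is_derive_unique; apply dsq; apply Hder; lra).
          assert (HG : Gf m g z x (C x) < 0) by (apply Hneg; lra).
          assert (HN : 0 < 2 * C x * Ff m g z x (C x) + Gf m g z x (C x)).
          { apply (I2def m g z u x (C x) Hm Hg Hu Hs HD Hzu); [unfold Vt in Hx; lra | | lra].
            destruct (Rle_lt_or_eq_dec x Vt (proj2 Hx)) as [H|H]; [left; unfold Vt in H; lra|right].
            unfold Vt in H. nra. }
          replace (2 * C x * (Ff m g z x (C x) / Gf m g z x (C x)) + 1)
            with ((2 * C x * Ff m g z x (C x) + Gf m g z x (C x)) / Gf m g z x (C x)) by (field; lra).
          apply Rdiv_pos_neg; auto.
        + subst x.
          replace (Derive (fun t : R => C t ^ 2 + t) u) with (2 * C u * c + 1)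
            by (symmetry; apply is_derive_unique; apply dsq; exact HdC).
          rewrite HC8.
          assert (Hs0 : u^2 + 3*u + 1 = 0) by (unfold Vt in HVt, Hx; nra).
          apply (corner m g z u c Hm Hg Hu Hs0 HD Hzu Hc Hq). }
    assert (HD2 : 0 < C V1 ^ 2 + V1).
    { apply (endpoint (fun t => C t ^ 2 + t) (fun t => 2 * C t * (Ff m g z t (C t) / Gf m g z t (C t)) + 1) V1 Vt); [lra| | | |].
      - intros x Hx. apply dsq. apply Hder. lra.
      - intros x Hx. apply P2. auto.
      - apply (lim_right_ext C (fun x y => y ^ 2 + x) V1). apply cont_D2. exact HCx.
      - intros H0.
        destruct (ev_pos_right C (fun x y => 2 * y * Ff m g z x y + Gf m g z x y) V1) as [eta [Heta Hev]].
        + apply (cont_N m g z Cx V1 HCx). lra.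
        + apply (I2def m g z u V1 (C V1) Hm Hg Hu Hs HD Hzu); [unfold Vt in HB; lra | left; unfold Vt in HB; lra | lra].
        + exists (Rmin eta (u - V1)). split. apply Rmin_glb_lt; lra.
          intros x Hx.
          assert (Hx1 : x < V1 + eta) by (assert (Rmin eta (u - V1) <= eta) by apply Rmin_l; lra).
          assert (Hx2 : x < u) by (assert (Rmin eta (u - V1) <= u - V1) by apply Rmin_r; lra).
          assert (HG : Gf m g z x (C x) < 0) by (apply Hneg; lra).
          assert (HN := Hev x (conj (proj1 Hx) Hx1)). simpl in HN.
          replace (2 * C x * (Ff m g z x (C x) / Gf m g z x (C x)) + 1)
            with ((2 * C x * Ff m g z x (C x) + Gf m g z x (C x)) / Gf m g z x (C x)) by (field; lra).
          apply Rdiv_pos_neg; auto. }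
    assert (Cpt1 g ^ 2 < C V1 ^ 2) by lra.
    nra.
Qed.

Theorem mainTheorem14 (m g gs : R)
  (Hm : m = 1 \/ m = 2) (Hgs : is_gamma_star gs) (Hg : gs < g <= gamma1) :
  (forall (z : R) (C : R -> R), 0 < z <= z1 g ->
      is_P8_solution m g z C -> C (Vpt1 g) > Cpt1 g) /\
  (forall (z : R) (C : R -> R), 0 < z <= zM g ->
      is_P8_solution m g z C -> C (Vpt1 g) = Cpt1 g -> z1 g < z <= zM g).
Proof.
  destruct Hgs as [Hgs1 _]. assert (Hg' : 1 < g <= gamma1) by lra.
  split.
  - intros z C Hz HP. exact (key m g z C Hm Hg' Hz HP).
  - intros z C Hz HP Heq. split; [|lra].
    destruct (Rlt_or_le (z1 g) z) as [H|H]; auto. exfalso.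
    assert (K := key m g z C Hm Hg' (conj (proj1 Hz) H) HP). lra.
Qed.
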